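(* Let $A,B,C,D,E$ be compact convex sets in the plane forming a holey family, such that $D\in conv(ABC)$ and $E\in conv(ABD)$. Then $D\cap E\subset \mathrm{hollow}(ABC)$.
   Context: A family of compact convex sets in the plane is holey if any two members intersect and no three distinct members have a common point. For three pairwise intersecting compact convex sets $X,Y,Z$ with no common point, $o(XYZ)=o(xyz)$ for any $x\in Y\cap Z$, $y\in X\cap Z$, $z\in X\cap Y$, where $o(xyz)=+1$ for a counterclockwise and $-1$ for a clockwise triangle (independent of the choice); and $\mathbb{R}^2\setminus(X\cup Y\cup Z)$ has exactly one bounded connected component, denoted $\mathrm{hollow}(XYZ)$. We write $O\in conv(XYZ)$ if $o(XYO)=o(YZO)=o(ZXO)=1$ or all three equal $-1$. *)

(* Defs.v *)
From HB Require Import structures.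
From mathcomp Require Import all_boot all_order all_algebra.
From mathcomp Require Import all_classical all_reals all_analysis.
Set Implicit Arguments. Unset Strict Implicit. Unset Printing Implicit Defensive.
Import Order.TTheory GRing.Theory Num.Theory.
Import numFieldNormedType.Exports.
Local Open Scope classical_set_scope.
Local Open Scope ring_scope.

Section Plane.
Variable R : realType.
Definition plane := (R * R)%type.

Definition pconvex (S : set plane) : Prop :=
  forall x y : plane, S x -> S y -> forall t : R, 0 <= t -> t <= 1 ->
    S ((1 - t) * x.1 + t * y.1, (1 - t) * x.2 + t * y.2).

Definition cconvex (S : set plane) : Prop := compact S /\ pconvex S.

Definition holey (I : Type) (F : I -> set plane) : Prop :=
  (forall i j : I, F i `&` F j !=set0) /\
  (forall i j k : I, i <> j -> j <> k -> i <> k -> F i `&` F j `&` F k = set0).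

(* twice the signed area of the triangle xyz: > 0 iff counterclockwise *)
Definition det3 (x y z : plane) : R :=
  (y.1 - x.1) * (z.2 - x.2) - (y.2 - x.2) * (z.1 - x.1).

(* o(XYZ) = +1, resp. -1 : o(xyz) for x in Y∩Z, y in X∩Z, z in X∩Y
   (the value does not depend on the choice, see context) *)
Definition orient_pos (X Y Z : set plane) : Prop :=
  exists x y z : plane, (Y `&` Z) x /\ (X `&` Z) y /\ (X `&` Y) z /\ 0 < det3 x y z.
Definition orient_neg (X Y Z : set plane) : Prop :=
  exists x y z : plane, (Y `&` Z) x /\ (X `&` Z) y /\ (X `&` Y) z /\ det3 x y z < 0.

(* O ∈ conv(XYZ) *)
Definition in_conv (O X Y Z : set plane) : Prop :=
  (orient_pos X Y O /\ orient_pos Y Z O /\ orient_pos Z X O) \/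
  (orient_neg X Y O /\ orient_neg Y Z O /\ orient_neg Z X O).

Definition pbounded (S : set plane) : Prop :=
  exists M : R, forall p : plane, S p -> `|p.1| <= M /\ `|p.2| <= M.

(* hollow(XYZ): the (unique) bounded connected component of R^2 \ (X ∪ Y ∪ Z);
   p lies in it iff p is in the complement and its component there is bounded *)
Definition hollow (X Y Z : set plane) : set plane :=
  [set p | (~` (X `|` Y `|` Z)) p /\
           pbounded (connected_component (~` (X `|` Y `|` Z)) p)].
End Plane.

(* Main.v *)
Require Import Defs.
From mathcomp Require Import all_boot all_order all_algebra.
From mathcomp Require Import all_classical all_reals all_analysis.
From mathcomp.algebra_tactics Require Import ring lra.
Set Implicit Arguments. Unset Strict Implicit. Unset Printing Implicit Defensive.
Import Order.TTheory GRing.Theory Num.Theory.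
Import numFieldNormedType.Exports.
Local Open Scope classical_set_scope.
Local Open Scope ring_scope.

Section Geo.
Variable R : realType.
Implicit Types (u v w x y z q : plane R) (S : set (plane R)).

Definition cmb (t : R) (x y : plane R) : plane R :=
  ((1 - t) * x.1 + t * y.1, (1 - t) * x.2 + t * y.2).

Lemma cvx_cmb S x y t : pconvex S -> S x -> S y -> 0 <= t -> t <= 1 -> S (cmb t x y).
Proof. by move=> cS Sx Sy t0 t1; apply: cS. Qed.

Lemma pairE (a b : plane R) : a.1 = b.1 -> a.2 = b.2 -> a = b.
Proof. by case: a => ? ?; case: b => ? ? /= -> ->. Qed.

Lemma det3_cycl x y z : det3 x y z = det3 y z x.
Proof. rewrite /det3; ring. Qed.

Lemma det3_swap x y z : det3 x z y = - det3 x y z.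
Proof. rewrite /det3; ring. Qed.

Lemma det3_cmb1 t u u' v w : det3 (cmb t u u') v w = (1 - t) * det3 u v w + t * det3 u' v w.
Proof. rewrite /det3 /cmb /=; ring. Qed.
Lemma det3_cmb2 t u v v' w : det3 u (cmb t v v') w = (1 - t) * det3 u v w + t * det3 u v' w.
Proof. rewrite /det3 /cmb /=; ring. Qed.
Lemma det3_cmb3 t u v w w' : det3 u v (cmb t w w') = (1 - t) * det3 u v w + t * det3 u v w'.
Proof. rewrite /det3 /cmb /=; ring. Qed.

Definition onseg q u v := exists2 t : R, 0 <= t <= 1 & q = cmb t u v.

Lemma onseg_in S q u v : pconvex S -> S u -> S v -> onseg q u v -> S q.
Proof. by move=> cS Su Sv [t /andP[t0 t1] ->]; apply: cvx_cmb. Qed.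

Lemma onseg_det q u v : onseg q u v -> det3 q u v = 0.
Proof. by move=> [t _ ->]; rewrite /det3 /cmb /=; ring. Qed.

Lemma lin_helper1 (T l a b : R) : T * (1 - l) = 1 -> a = (1 - T) * b + T * (a + l * (b - a)).
Proof.
move=> h; have -> : (1 - T) * b + T * (a + l * (b - a)) = a - (a - b) * (1 - T * (1 - l)) by ring.
by rewrite h; ring.
Qed.
Lemma lin_helper2 (T l a b : R) : T * l = 1 -> b = (1 - T) * a + T * (a + l * (b - a)).
Proof.
move=> h; have -> : (1 - T) * a + T * (a + l * (b - a)) = a + (T * l) * (b - a) by ring.
by rewrite h; ring.
Qed.

Lemma collinear3 u v w : det3 u v w = 0 -> [\/ onseg u v w, onseg v u w | onseg w u v].
Proof.
rewrite /det3 => h.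
pose a1 := v.1 - u.1; pose a2 := v.2 - u.2; pose b1 := w.1 - u.1; pose b2 := w.2 - u.2.
have key : exists l : R, b1 = l * a1 /\ b2 = l * a2 \/ (a1 = 0 /\ a2 = 0).
  have [a10|a10] := eqVneq a1 0.
    have [a20|a20] := eqVneq a2 0; first by exists 0; right.
    exists (b2 / a2); left; split; last by rewrite mulrVK ?unitfE.
    rewrite /a1 /b1 /a2 /b2 in a10 a20 h *.
    have : (w.1 - u.1) * (v.2 - u.2) = 0.
      by rewrite -[LHS]mulrC; move: h; rewrite a10 mul0r sub0r => /eqP; rewrite oppr_eq0 mulrC => /eqP.
    by move/eqP; rewrite mulf_eq0 (negPf a20) orbF => /eqP ->; rewrite a10 mulr0.
  exists (b1 / a1); left; split; first by rewrite mulrVK ?unitfE.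
  rewrite /a1 /b1 /a2 /b2 in a10 h *.
  apply: (mulfI a10); rewrite mulrA (mulrC _ (_ / _)) divfK //; lra.
case: key => l [[hb1 hb2]|[ha1 ha2]]; last first.
  constructor 2; exists 0; first by rewrite lexx ler01.
  by apply: pairE; rewrite /cmb /=; rewrite /a1 /a2 in ha1 ha2; lra.
rewrite /a1 /a2 /b1 /b2 in hb1 hb2.
have hw1 : w.1 = u.1 + l * (v.1 - u.1) by lra.
have hw2 : w.2 = u.2 + l * (v.2 - u.2) by lra.
have [l0|l0] := lerP l 0.
  constructor 1; exists (1 / (1 - l)).
    apply/andP; split; first by apply: divr_ge0; lra.
    by rewrite ler_pdivrMr ?mul1r; lra.
  have ht : 1 / (1 - l) * (1 - l) = 1 by field; lra.
  by apply: pairE; rewrite /cmb /= ?hw1 ?hw2; apply: lin_helper1.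
have [l1|l1] := lerP l 1.
  constructor 3; exists l; first by apply/andP; split; lra.
  by apply: pairE; rewrite /cmb /=; lra.
constructor 2; exists (1 / l).
  apply/andP; split; first by apply: divr_ge0; lra.
  by rewrite ler_pdivrMr ?mul1r; lra.
have ht : 1 / l * l = 1 by field; lra.
by apply: pairE; rewrite /cmb /= ?hw1 ?hw2; apply: lin_helper2.
Qed.


Definition tfree (X Y Z : set (plane R)) := forall r, X r -> Y r -> Z r -> False.

Lemma nondeg X Y Z u v w : pconvex X -> pconvex Y -> pconvex Z -> tfree X Y Z ->
  Y u -> Z u -> X v -> Z v -> X w -> Y w -> det3 u v w != 0.
Proof.
move=> cX cY cZ tf Yu Zu Xv Zv Xw Yw; apply/eqP => /collinear3 [h|h|h].
- by apply: (tf u) => //; apply: onseg_in h.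
- by apply: (tf v) => //; apply: onseg_in h.
- by apply: (tf w) => //; apply: onseg_in h.
Qed.

Lemma sgn_trans (x y z : R) : 0 < x * y -> 0 < y * z -> 0 < x * z.
Proof.
move=> h1 h2.
have e : (x * z) * (y * y) = (x * y) * (y * z) by ring.
have h3 : 0 < (x * z) * (y * y) by rewrite e; exact: mulr_gt0.
have yn : y != 0 by apply/eqP => y0; move: h1; rewrite y0 mulr0 ltxx.
have hy : 0 < y * y by rewrite -expr2 exprn_even_gt0.
by move: h3; rewrite pmulr_lgt0.
Qed.

Lemma interp_zero (a b : R) : a * b < 0 -> exists2 t, 0 <= t <= 1 & (1 - t) * a + t * b = 0.
Proof.
move=> h.
have hab : a - b != 0.
  apply/eqP => e; have ab : a = b by lra.
  by move: h; rewrite ab; nra.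
exists (a / (a - b)); last by field.
have [a0|a0] := ltrP 0 a.
  have b0 : b < 0 by nra.
  have d0 : 0 < a - b by lra.
  apply/andP; split; first by apply: divr_ge0; lra.
  by rewrite ler_pdivrMr // mul1r; lra.
have a0' : a < 0.
  by rewrite lt_neqAle a0 andbT; apply/eqP => e; move: h; rewrite e mul0r ltxx.
have b0 : 0 < b by nra.
have d0 : a - b < 0 by lra.
have -> : a / (a - b) = (- a) / (b - a) by field; lra.
apply/andP; split; first by apply: divr_ge0; lra.
by rewrite ler_pdivrMr ?mul1r; lra.
Qed.

Lemma L1_step1 X Y Z u u' v w : pconvex X -> pconvex Y -> pconvex Z -> tfree X Y Z ->
  Y u -> Z u -> Y u' -> Z u' -> X v -> Z v -> X w -> Y w -> 0 < det3 u v w * det3 u' v w.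
Proof.
move=> cX cY cZ tf Yu Zu Yu' Zu' Xv Zv Xw Yw.
have n1 := nondeg cX cY cZ tf Yu Zu Xv Zv Xw Yw.
have n2 := nondeg cX cY cZ tf Yu' Zu' Xv Zv Xw Yw.
rewrite lt_def mulf_neq0 //=; rewrite leNgt; apply/negP => /interp_zero [t /andP[t0 t1] ht].
have := nondeg cX cY cZ tf (cvx_cmb cY Yu Yu' t0 t1) (cvx_cmb cZ Zu Zu' t0 t1) Xv Zv Xw Yw.
by rewrite det3_cmb1 ht eqxx.
Qed.

Lemma L1_step2 X Y Z u v v' w : pconvex X -> pconvex Y -> pconvex Z -> tfree X Y Z ->
  Y u -> Z u -> X v -> Z v -> X v' -> Z v' -> X w -> Y w -> 0 < det3 u v w * det3 u v' w.
Proof.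
move=> cX cY cZ tf Yu Zu Xv Zv Xv' Zv' Xw Yw.
have n1 := nondeg cX cY cZ tf Yu Zu Xv Zv Xw Yw.
have n2 := nondeg cX cY cZ tf Yu Zu Xv' Zv' Xw Yw.
rewrite lt_def mulf_neq0 //=; rewrite leNgt; apply/negP => /interp_zero [t /andP[t0 t1] ht].
have := nondeg cX cY cZ tf Yu Zu (cvx_cmb cX Xv Xv' t0 t1) (cvx_cmb cZ Zv Zv' t0 t1) Xw Yw.
by rewrite det3_cmb2 ht eqxx.
Qed.

Lemma L1_step3 X Y Z u v w w' : pconvex X -> pconvex Y -> pconvex Z -> tfree X Y Z ->
  Y u -> Z u -> X v -> Z v -> X w -> Y w -> X w' -> Y w' -> 0 < det3 u v w * det3 u v w'.
Proof.
move=> cX cY cZ tf Yu Zu Xv Zv Xw Yw Xw' Yw'.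
have n1 := nondeg cX cY cZ tf Yu Zu Xv Zv Xw Yw.
have n2 := nondeg cX cY cZ tf Yu Zu Xv Zv Xw' Yw'.
rewrite lt_def mulf_neq0 //=; rewrite leNgt; apply/negP => /interp_zero [t /andP[t0 t1] ht].
have := nondeg cX cY cZ tf Yu Zu Xv Zv (cvx_cmb cX Xw Xw' t0 t1) (cvx_cmb cY Yw Yw' t0 t1).
by rewrite det3_cmb3 ht eqxx.
Qed.

Lemma L1 X Y Z u v w u' v' w' : pconvex X -> pconvex Y -> pconvex Z -> tfree X Y Z ->
  Y u -> Z u -> X v -> Z v -> X w -> Y w ->
  Y u' -> Z u' -> X v' -> Z v' -> X w' -> Y w' -> 0 < det3 u v w * det3 u' v' w'.
Proof.
move=> cX cY cZ tf Yu Zu Xv Zv Xw Yw Yu' Zu' Xv' Zv' Xw' Yw'.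
apply: (sgn_trans (L1_step1 cX cY cZ tf Yu Zu Yu' Zu' Xv Zv Xw Yw)).
apply: (sgn_trans (L1_step2 cX cY cZ tf Yu' Zu' Xv Zv Xv' Zv' Xw Yw)).
exact: (L1_step3 cX cY cZ tf Yu' Zu' Xv' Zv' Xw Yw Xw' Yw').
Qed.


Definition fd q (d x : plane R) : R := d.1 * (x.2 - q.2) - d.2 * (x.1 - q.1).
Definition crf (a b dd : R) : R :=
  if (a < 0) && (0 < b) && (0 < dd) then 1
  else if (b < 0) && (0 < a) && (dd < 0) then -1 else 0.
Definition tclf (d1 d2 d3 : R) : R :=
  if (0 < d1) && (0 < d2) && (0 < d3) then 1
  else if (d1 < 0) && (d2 < 0) && (d3 < 0) then -1 else 0.
Definition cr q d u v := crf (fd q d u) (fd q d v) (det3 q u v).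
Definition tcl q u v w := tclf (det3 q u v) (det3 q v w) (det3 q w u).

Ltac simp_cmp := repeat match goal with
 | H : is_true (?x < ?y) |- context[?x < ?y] => rewrite H
 | H : is_true (?x < ?y) |- context[?y < ?x] => rewrite (lt_gtF H)
 end; rewrite ?ltxx /=.

Lemma crf_anti a b dd : crf b a (- dd) = - crf a b dd.
Proof.
rewrite /crf oppr_gt0 oppr_lt0.
have [h|h|h] := ltgtP a 0; have [k|k|k] := ltgtP b 0; have [l|l|l] := ltgtP dd 0;
  rewrite ?h ?k ?l; simp_cmp; rewrite ?oppr0 ?opprK //.
Qed.

Lemma cr_anti q d u v : cr q d v u = - cr q d u v.
Proof. by rewrite /cr det3_swap crf_anti. Qed.

Lemma tri_core (a b c d1 d2 d3 : R) : a != 0 -> b != 0 -> c != 0 ->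
  (d1 = 0 -> 0 < a * b) -> (d2 = 0 -> 0 < b * c) -> (d3 = 0 -> 0 < c * a) ->
  d2 * a + d3 * b + d1 * c = 0 ->
  crf a b d1 + crf b c d2 + crf c a d3 = tclf d1 d2 d3.
Proof.
move=> ha hb hc e1 e2 e3 id; rewrite /crf /tclf.
have [h|h|h] := ltgtP a 0; last by rewrite h eqxx in ha.
all: have [k|k|k] := ltgtP b 0; last by rewrite k eqxx in hb.
all: have [l|l|l] := ltgtP c 0; last by rewrite l eqxx in hc.
all: have [m1|m1|m1] := ltgtP d1 0; [| | move: e1 id; rewrite m1 => e1 id; have := e1 erefl => e1' ].
all: have [m2|m2|m2] := ltgtP d2 0; [| | move: e2 id; rewrite m2 => e2 id; have := e2 erefl => e2' ].
all: have [m3|m3|m3] := ltgtP d3 0; [| | move: e3 id; rewrite m3 => e3 id; have := e3 erefl => e3' ].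
all: simp_cmp.
all: try lra.
all: nra.
Qed.

End Geo.

Section Geo2.
Variable R : realType.
Implicit Types (u v w x y z q d : plane R) (S : set (plane R)).

Lemma tri q d u v w : fd q d u != 0 -> fd q d v != 0 -> fd q d w != 0 ->
  (det3 q u v = 0 -> 0 < fd q d u * fd q d v) ->
  (det3 q v w = 0 -> 0 < fd q d v * fd q d w) ->
  (det3 q w u = 0 -> 0 < fd q d w * fd q d u) ->
  cr q d u v + cr q d v w + cr q d w u = tcl q u v w.
Proof.
move=> hu hv hw e1 e2 e3; rewrite /cr /tcl; apply: tri_core => //.
by rewrite /det3 /fd; ring.
Qed.

Lemma fd_cmb q d t u v : fd q d (cmb t u v) = (1 - t) * fd q d u + t * fd q d v.
Proof. by rewrite /fd /cmb /=; ring. Qed.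

Lemma edge_ok S q d u v : pconvex S -> S u -> S v -> ~ S q ->
  fd q d u != 0 -> fd q d v != 0 -> det3 q u v = 0 -> 0 < fd q d u * fd q d v.
Proof.
move=> cS Su Sv Sq hu hv h0.
rewrite lt_def mulf_neq0 //= leNgt; apply/negP => /interp_zero [t /andP[t0 t1] ht].
apply: Sq.
have zq : cmb t u v = q.
  have f0 : fd q d (cmb t u v) = 0 by rewrite fd_cmb.
  have g0 : det3 q u (cmb t u v) = 0 by rewrite det3_cmb3 h0 /det3; ring.
  move: f0 g0 hu; rewrite /fd /det3 /cmb /=.
  set w1 := (1 - t) * u.1 + t * v.1 - q.1.
  set w2 := (1 - t) * u.2 + t * v.2 - q.2.
  move=> f0 g0 hu.
  have e1 : w1 * (d.1 * (u.2 - q.2) - d.2 * (u.1 - q.1)) =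
     (u.1 - q.1) * (d.1 * w2 - d.2 * w1) - d.1 * ((u.1 - q.1) * w2 - (u.2 - q.2) * w1) by ring.
  have e2 : w2 * (d.1 * (u.2 - q.2) - d.2 * (u.1 - q.1)) =
     (u.2 - q.2) * (d.1 * w2 - d.2 * w1) - d.2 * ((u.1 - q.1) * w2 - (u.2 - q.2) * w1) by ring.
  rewrite f0 g0 !mulr0 subr0 in e1 e2.
  move/eqP: e1; rewrite mulf_eq0 (negPf hu) orbF /w1 subr_eq0 => /eqP h1.
  move/eqP: e2; rewrite mulf_eq0 (negPf hu) orbF /w2 subr_eq0 => /eqP h2.
  by apply: pairE.
by rewrite -zq; apply: cvx_cmb.
Qed.

Fixpoint bnd q (s : seq (plane R)) : R :=
  if s is x :: s' then `|(x.2 - q.2) / (x.1 - q.1)| + bnd q s' else 0.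

Lemma bnd_ge0 q s : 0 <= bnd q s.
Proof. by elim: s => //= x s ih; rewrite addr_ge0. Qed.

Lemma bnd_le q s x : x \in s -> `|(x.2 - q.2) / (x.1 - q.1)| <= bnd q s.
Proof.
elim: s => //= y s ih; rewrite in_cons => /orP[/eqP ->|/ih h].
  by rewrite lerDl bnd_ge0.
by rewrite (le_trans h) // lerDr.
Qed.

Lemma generic_dir q (s : seq (plane R)) : (forall x, x \in s -> x != q) ->
  exists d, forall x, x \in s -> fd q d x != 0.
Proof.
move=> hs; exists (1, - (1 + bnd q s)) => x xs; rewrite /fd /=.
apply/eqP => h.
have [e|e] := eqVneq (x.1 - q.1) 0.
  move: h; rewrite e mulr0 subr0 mul1r => e2.
  by move: (hs x xs); rewrite (_ : x = q) ?eqxx //; apply: pairE; lra.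
have : (x.2 - q.2) / (x.1 - q.1) = - (1 + bnd q s).
  apply: (mulIf e); rewrite divfK //; lra.
move=> r; have := bnd_le q xs; rewrite r normrN ger0_norm; last by rewrite addr_ge0 ?bnd_ge0.
lra.
Qed.

Lemma tclf_vals (a1 a2 a3 : R) : tclf a1 a2 a3 = 0 \/
  (tclf a1 a2 a3 = 1 /\ [/\ 0 < a1, 0 < a2 & 0 < a3]) \/
  (tclf a1 a2 a3 = -1 /\ [/\ a1 < 0, a2 < 0 & a3 < 0]).
Proof.
rewrite /tclf.
case: ifP => [/andP[/andP[h1 h2] h3]|_]; first by right; left.
case: ifP => [/andP[/andP[h1 h2] h3]|_]; first by right; right.
by left.
Qed.

Lemma tcl_sum q u v w : det3 q u v + det3 q v w + det3 q w u = det3 u v w.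
Proof. by rewrite /det3; ring. Qed.

Lemma tcl_vals q u v w : tcl q u v w = 0 \/
  (tcl q u v w = 1 /\ 0 < det3 u v w) \/ (tcl q u v w = -1 /\ det3 u v w < 0).
Proof.
rewrite /tcl -(tcl_sum q u v w).
case: (tclf_vals (det3 q u v) (det3 q v w) (det3 q w u)) => [->|[[-> [h1 h2 h3]]|[-> [h1 h2 h3]]]].
- by left.
- by right; left; split => //; lra.
- by right; right; split => //; lra.
Qed.

Lemma tcl_degen q u v w : det3 u v w = 0 -> tcl q u v w = 0.
Proof. by move=> h; case: (tcl_vals q u v w) => [//|[[_ ]|[_ ]]]; rewrite h ltxx. Qed.

Lemma tcl_allpos q u v w : 0 < det3 q u v -> 0 < det3 q v w -> 0 < det3 q w u -> tcl q u v w = 1.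
Proof. by move=> h1 h2 h3; rewrite /tcl /tclf h1 h2 h3. Qed.

Lemma tcl_allneg q u v w : det3 q u v < 0 -> det3 q v w < 0 -> det3 q w u < 0 -> tcl q u v w = -1.
Proof. by move=> h1 h2 h3; rewrite /tcl /tclf (lt_gtF h1) h1 h2 h3. Qed.

Lemma tcl_mixed1 q u v w : det3 q u v * det3 q v w < 0 -> tcl q u v w = 0.
Proof.
move=> h; rewrite /tcl /tclf.
case: ifP => [/andP[/andP[h1 h2] _]|_]; first by nra.
by case: ifP => [/andP[/andP[h1 h2] _]|_] //; nra.
Qed.
Lemma tcl_mixed2 q u v w : det3 q v w * det3 q w u < 0 -> tcl q u v w = 0.
Proof.
move=> h; rewrite /tcl /tclf.
case: ifP => [/andP[/andP[h1 h2] h3]|_]; first by nra.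
by case: ifP => [/andP[/andP[h1 h2] h3]|_] //; nra.
Qed.
Lemma tcl_mixed3 q u v w : det3 q w u * det3 q u v < 0 -> tcl q u v w = 0.
Proof.
move=> h; rewrite /tcl /tclf.
case: ifP => [/andP[/andP[h1 h2] h3]|_]; first by nra.
by case: ifP => [/andP[/andP[h1 h2] h3]|_] //; nra.
Qed.

Lemma tcl_nz q u v w : tcl q u v w != 0 ->
  exists2 sg : R, (sg = 1 \/ sg = -1) &
   [/\ 0 < sg * det3 q u v, 0 < sg * det3 q v w & 0 < sg * det3 q w u].
Proof.
rewrite /tcl; case: (tclf_vals (det3 q u v) (det3 q v w) (det3 q w u)) => [->|[[_ [h1 h2 h3]]|[_ [h1 h2 h3]]]].
- by rewrite eqxx.
- by exists 1; [left|rewrite !mul1r].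
- by exists (-1); [right|rewrite !mulN1r !oppr_gt0].
Qed.

Lemma bary q u v w : det3 u v w * q.1 = det3 q v w * u.1 + det3 u q w * v.1 + det3 u v q * w.1 /\
                     det3 u v w * q.2 = det3 q v w * u.2 + det3 u q w * v.2 + det3 u v q * w.2.
Proof. by split; rewrite /det3; ring. Qed.

(* if q is inside triangle uvw (all three subtriangles same sign) then q in convex S *)
Lemma tcl_conv S q u v w : pconvex S -> S u -> S v -> S w -> ~ S q -> tcl q u v w = 0.
Proof.
move=> cS Su Sv Sw Sq; apply/eqP; apply: contraT => /tcl_nz [sg hsg [h1 h2 h3]].
exfalso; apply: Sq.
set a := det3 q v w in h2 *; set b := det3 q w u in h3 *; set c := det3 q u v in h1 *.
have hb' : det3 u q w = b by rewrite /b /det3; ring.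
have hc' : det3 u v q = c by rewrite /c /det3; ring.
have hD : det3 u v w = a + b + c by rewrite /a /b /c /det3; ring.
have [e1 e2] := bary q u v w; rewrite hb' hc' hD -/a in e1 e2.
have ab0 : a + b != 0 by apply/eqP => e; case: hsg => es; rewrite es in h1 h2 h3; nra.
have abc0 : a + b + c != 0 by apply/eqP => e; case: hsg => es; rewrite es in h1 h2 h3; nra.
have t1 : 0 <= b / (a + b) <= 1.
  case: hsg => es; rewrite es in h1 h2 h3.
  - by apply/andP; split; [apply: divr_ge0; lra| rewrite ler_pdivrMr ?mul1r; lra].
  - have -> : b / (a + b) = (- b) / (- (a + b)) by rewrite invrN mulrN mulNr opprK.
    by apply/andP; split; [apply: divr_ge0; lra| rewrite ler_pdivrMr ?mul1r; lra].
have t2 : 0 <= c / (a + b + c) <= 1.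
  case: hsg => es; rewrite es in h1 h2 h3.
  - by apply/andP; split; [apply: divr_ge0; lra| rewrite ler_pdivrMr ?mul1r; lra].
  - have -> : c / (a + b + c) = (- c) / (- (a + b + c)) by rewrite invrN mulrN mulNr opprK.
    by apply/andP; split; [apply: divr_ge0; lra| rewrite ler_pdivrMr ?mul1r; lra].
case/andP: t1 => t10 t11; case/andP: t2 => t20 t21.
have Sm := cvx_cmb cS Su Sv t10 t11.
have := cvx_cmb cS Sm Sw t20 t21.
have -> : cmb (c / (a + b + c)) (cmb (b / (a + b)) u v) w = q.
  apply: pairE; rewrite /cmb /=.
    apply: (mulfI abc0); rewrite e1; field; by apply/andP; split.
  apply: (mulfI abc0); rewrite e2; field; by apply/andP; split.
done.
Qed.


Definition good q d u v := [/\ fd q d u != 0, fd q d v != 0 & (det3 q u v = 0 -> 0 < fd q d u * fd q d v)].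

Lemma good_in S q d u v : pconvex S -> S u -> S v -> ~ S q -> fd q d u != 0 -> fd q d v != 0 -> good q d u v.
Proof. by move=> cS Su Sv Sq hu hv; split => //; apply: edge_ok Sq hu hv. Qed.

Lemma good_nc q d u v : det3 q u v != 0 -> fd q d u != 0 -> fd q d v != 0 -> good q d u v.
Proof. by move=> h hu hv; split => // e; rewrite e eqxx in h. Qed.

Lemma good_sym q d u v : good q d u v -> good q d v u.
Proof.
case=> hu hv he; split => // e; rewrite mulrC; apply: he.
by move: e; rewrite det3_swap => /eqP; rewrite oppr_eq0 => /eqP.
Qed.

Lemma tri_good q d u v w : good q d u v -> good q d v w -> good q d w u ->
  cr q d u v + cr q d v w + cr q d w u = tcl q u v w.
Proof. by case=> hu hv e1 [_ hw e2] [_ _ e3]; apply: tri. Qed.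

Lemma hex_tcl q d xy yz zx xw yw zw :
  good q d xy zx -> good q d zx yz -> good q d yz xy -> good q d xy xw -> good q d xw zx ->
  good q d zx zw -> good q d zw yz -> good q d yz yw -> good q d yw xy -> good q d xw yw ->
  good q d zw xw -> good q d yw zw ->
  tcl q xy zx yz + tcl q xy xw zx + tcl q zx zw yz + tcl q yz yw xy =
  tcl q xy xw yw + tcl q xw zx zw + tcl q zw yz yw + tcl q xw zw yw.
Proof.
move=> g1 g2 g3 g4 g5 g6 g7 g8 g9 g10 g11 g12.
rewrite -(tri_good g1 g2 g3) -(tri_good g4 g5 (good_sym g1)) -(tri_good g6 g7 (good_sym g2)).
rewrite -(tri_good g8 g9 (good_sym g3)) -(tri_good g4 g10 g9) -(tri_good g5 g6 g11).
rewrite -(tri_good g7 g8 g12) -(tri_good (good_sym g11) (good_sym g12) (good_sym g10)).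
rewrite (cr_anti q d zx xy) (cr_anti q d yz zx) (cr_anti q d xy yz) (cr_anti q d zw xw).
rewrite (cr_anti q d yw zw) (cr_anti q d yw xw).
lra.
Qed.

Lemma tcl_neg_cases q u v w (sg : R) : (sg = 1 \/ sg = -1) -> sg * det3 u v w < 0 ->
  tcl q u v w = 0 \/ tcl q u v w = - sg.
Proof.
move=> hs h; case: (tcl_vals q u v w) => [->|[[-> h']|[-> h']]]; first by left.
- by right; case: hs => e; rewrite e in h *; lra.
- by right; case: hs => e; rewrite e in h *; lra.
Qed.

Lemma tcl_nz_val q u v w (sg : R) : (sg = 1 \/ sg = -1) -> sg * det3 u v w < 0 ->
  tcl q u v w != 0 -> tcl q u v w = - sg.
Proof. by move=> hs h; case: (tcl_neg_cases q hs h) => ->; rewrite ?eqxx. Qed.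

Lemma level2 A B C D (q ab ac bc ad bd cd : plane R) (ep : R) :
  pconvex A -> pconvex B -> pconvex C -> pconvex D ->
  A ab -> B ab -> A ac -> C ac -> B bc -> C bc -> A ad -> D ad -> B bd -> D bd -> C cd -> D cd ->
  ~ A q -> ~ B q -> ~ C q -> ~ D q ->
  (ep = 1 \/ ep = -1) ->
  0 < ep * det3 bd ad ab -> 0 < ep * det3 cd bd bc -> 0 < ep * det3 ad cd ac ->
  tcl q ab ad bd != 0 -> tcl q ab ac bc != 0.
Proof.
move=> cA cB cC cD Aab Bab Aac Cac Bbc Cbc Aad Dad Bbd Dbd Ccd Dcd nA nB nC nD hep o1 o2 o3 h.
have ne : forall S x, S x -> ~ S q -> q != x by move=> S x Sx Sq; apply/eqP => e; apply: Sq; rewrite e.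
have hs : forall x, x \in [:: ab; ac; bc; ad; bd; cd] -> x != q.
  move=> x xs; apply/eqP => e; move: xs; rewrite e !inE; apply/negP; rewrite !negb_or.
  by rewrite (ne _ _ Aab nA) (ne _ _ Aac nA) (ne _ _ Bbc nB) (ne _ _ Aad nA) (ne _ _ Bbd nB) (ne _ _ Ccd nC).
have [d hd] := generic_dir hs.
have f1 : fd q d ab != 0 by apply: hd; rewrite !inE eqxx ?orbT.
have f2 : fd q d ac != 0 by apply: hd; rewrite !inE eqxx ?orbT.
have f3 : fd q d bc != 0 by apply: hd; rewrite !inE eqxx ?orbT.
have f4 : fd q d ad != 0 by apply: hd; rewrite !inE eqxx ?orbT.
have f5 : fd q d bd != 0 by apply: hd; rewrite !inE eqxx ?orbT.
have f6 : fd q d cd != 0 by apply: hd; rewrite !inE eqxx ?orbT.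
have := @hex_tcl q d ab bc ac ad bd cd
  (good_in cA Aab Aac nA f1 f2) (good_in cC Cac Cbc nC f2 f3) (good_in cB Bbc Bab nB f3 f1)
  (good_in cA Aab Aad nA f1 f4) (good_in cA Aad Aac nA f4 f2) (good_in cC Cac Ccd nC f2 f6)
  (good_in cC Ccd Cbc nC f6 f3) (good_in cB Bbc Bbd nB f3 f5) (good_in cB Bbd Bab nB f5 f1)
  (good_in cD Dad Dbd nD f4 f5) (good_in cD Dcd Dad nD f6 f4) (good_in cD Dbd Dcd nD f5 f6).
rewrite (tcl_conv cA Aab Aad Aac nA) (tcl_conv cC Cac Ccd Cbc nC) (tcl_conv cB Bbc Bbd Bab nB).
rewrite (tcl_conv cD Dad Dcd Dbd nD).
have v1 : tcl q ab ad bd = - ep.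
  have e : det3 ab ad bd = - det3 bd ad ab by rewrite /det3; ring.
  by apply: tcl_nz_val => //; rewrite e; lra.
have v2 := @tcl_neg_cases q ad ac cd ep hep (ltac:(rewrite det3_swap; lra)).
have v3 := @tcl_neg_cases q cd bc bd ep hep (ltac:(rewrite det3_swap; lra)).
move=> e; apply/eqP => e0; rewrite e0 v1 in e.
by case: v2 => e2; case: v3 => e3; rewrite e2 e3 in e; case: hep => es; rewrite es in e; lra.
Qed.



End Geo2.

Section Geo3.
Variable R : realType.
Implicit Types (u v w x y z q d : plane R) (S : set (plane R)).

Lemma hexABD A B D (q ab ad bd ae be p : plane R) (s : R) :
  pconvex A -> pconvex B -> pconvex D ->
  A ab -> B ab -> A ad -> D ad -> B bd -> D bd -> A ae -> B be -> D p ->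
  ~ A q -> ~ B q -> ~ D q -> (s = 1 \/ s = -1) ->
  0 < s * det3 be ae ab -> 0 < s * det3 p be bd ->
  det3 q ae be != 0 -> det3 q p ae != 0 -> det3 q be p != 0 ->
  tcl q ae ad p = - s ->
  (tcl q ae p be = 0 \/ (tcl q ae p be = s /\ tcl q p bd be = - s)) ->
  tcl q ab ad bd != 0.
Proof.
move=> cA cB cD Aab Bab Aad Dad Bbd Dbd Aae Bbe Dp nA nB nD hs o4 o3 n1 n2 n3 T1 T23.
have ne : forall S x, S x -> ~ S q -> q != x by move=> S x Sx Sq; apply/eqP => e; apply: Sq; rewrite e.
have hl : forall x, x \in [:: ab; ad; bd; ae; be; p] -> x != q.
  move=> x xs; apply/eqP => e; move: xs; rewrite e !inE; apply/negP; rewrite !negb_or.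
  by rewrite (ne _ _ Aab nA) (ne _ _ Aad nA) (ne _ _ Dbd nD) (ne _ _ Aae nA) (ne _ _ Bbe nB) (ne _ _ Dp nD).
have [d hd] := generic_dir hl.
have f1 : fd q d ab != 0 by apply: hd; rewrite !inE eqxx ?orbT.
have f2 : fd q d ad != 0 by apply: hd; rewrite !inE eqxx ?orbT.
have f3 : fd q d bd != 0 by apply: hd; rewrite !inE eqxx ?orbT.
have f4 : fd q d ae != 0 by apply: hd; rewrite !inE eqxx ?orbT.
have f5 : fd q d be != 0 by apply: hd; rewrite !inE eqxx ?orbT.
have f6 : fd q d p != 0 by apply: hd; rewrite !inE eqxx ?orbT.
have := @hex_tcl _ q d ab bd ad ae be p
  (good_in cA Aab Aad nA f1 f2) (good_in cD Dad Dbd nD f2 f3) (good_in cB Bbd Bab nB f3 f1)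
  (good_in cA Aab Aae nA f1 f4) (good_in cA Aae Aad nA f4 f2) (good_in cD Dad Dp nD f2 f6)
  (good_in cD Dp Dbd nD f6 f3) (good_in cB Bbd Bbe nB f3 f5) (good_in cB Bbe Bab nB f5 f1)
  (good_nc n1 f4 f5) (good_nc n2 f6 f4) (good_nc n3 f5 f6).
rewrite (tcl_conv cA Aab Aae Aad nA) (tcl_conv cD Dad Dp Dbd nD) (tcl_conv cB Bbd Bbe Bab nB) T1.
have e4 : det3 ab ae be = - det3 be ae ab by rewrite /det3; ring.
have e3 : det3 p bd be = - det3 p be bd by rewrite /det3; ring.
have v4 := @tcl_neg_cases _ q ab ae be s hs (ltac:(rewrite e4; lra)).
have v3 := @tcl_neg_cases _ q p bd be s hs (ltac:(rewrite e3; lra)).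
move=> e; apply/eqP => e0; rewrite e0 in e.
case: T23 => [e2|[e2 e5]]; rewrite e2 ?e5 in e.
- by case: v4 => e6; case: v3 => e7; rewrite e6 e7 in e; case: hs => es; rewrite es in e; lra.
- by case: v4 => e6; rewrite e6 in e; case: hs => es; rewrite es in e; lra.
Qed.

End Geo3.

Section Geo4.
Variable R : realType.
Implicit Types (u v w x y z q d : plane R) (S : set (plane R)).

Lemma boxPl (A : set (plane R)) q : closed A -> ~ A q ->
  exists2 e : R, 0 < e & forall r : plane R, `|r.1 - q.1| < e -> `|r.2 - q.2| < e -> ~ A r.
Proof.
move=> cA Aq.
have : open (~` A) by exact: closed_openC.
rewrite openE => /(_ q Aq).
move=> /nbhs_ballP [e e0 he]; exists e => // r h1 h2; apply: he.
by rewrite /ball /= /prod_ball; split; rewrite /ball /= distrC.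
Qed.

Lemma small2 (a b : R) : 0 < a -> 0 < b -> exists2 x : R, 0 < x & x <= a /\ x <= b.
Proof.
move=> a0 b0; exists (Num.min a b); first by rewrite lt_min a0 b0.
by split; rewrite ge_min lexx ?orbT.
Qed.

Lemma small4 (a b c e : R) : 0 < a -> 0 < b -> 0 < c -> 0 < e ->
  exists2 x : R, 0 < x & [/\ x <= a, x <= b, x <= c & x <= e].
Proof.
move=> a0 b0 c0 e0.
have [x1 x10 [h1 h2]] := small2 a0 b0.
have [x2 x20 [h3 h4]] := small2 c0 e0.
have [x x0 [h5 h6]] := small2 x10 x20.
by exists x => //; split; lra.
Qed.

Lemma box3 (A B C : set (plane R)) q : closed A -> closed B -> closed C -> ~ A q -> ~ B q -> ~ C q ->
  exists2 e : R, 0 < e & forall r : plane R, `|r.1 - q.1| < e -> `|r.2 - q.2| < e -> [/\ ~ A r, ~ B r & ~ C r].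
Proof.
move=> cA cB cC nA nB nC.
have [e1 e10 h1] := boxPl cA nA.
have [e2 e20 h2] := boxPl cB nB.
have [e3 e30 h3] := boxPl cC nC.
have [e e0 [k1 k2 k3 _]] := small4 e10 e20 e30 ltr01.
exists e => // r r1 r2; split; [apply: h1|apply: h2|apply: h3]; lra.
Qed.

Definition qf p a b (t et : R) : plane R :=
  (p.1 + t * (a.1 - p.1) + t * et * (b.1 - p.1), p.2 + t * (a.2 - p.2) + t * et * (b.2 - p.2)).

Lemma det3_qf p a b t et x y : det3 (qf p a b t et) x y =
  (1 - t - t * et) * det3 p x y + t * det3 a x y + (t * et) * det3 b x y.
Proof. by rewrite /det3 /qf /=; ring. Qed.

Lemma caseI_nd (p ae be ad : plane R) : det3 p ae be = 0 -> det3 ae p ad != 0 ->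
  p != be -> ae != be -> det3 ad be p != 0 /\ det3 ad ae be != 0.
Proof.
move=> c0 n pbe aebe.
have n' : det3 p ae ad != 0 by move: n; rewrite (_ : det3 ae p ad = - det3 p ae ad) ?oppr_eq0 // /det3; ring.
split; apply/eqP => h.
- have i1 : det3 p ae ad * (be.1 - p.1) + det3 ad be p * (ae.1 - p.1) - det3 p ae be * (ad.1 - p.1) = 0
    by rewrite /det3; ring.
  have i2 : det3 p ae ad * (be.2 - p.2) + det3 ad be p * (ae.2 - p.2) - det3 p ae be * (ad.2 - p.2) = 0
    by rewrite /det3; ring.
  have j1 : det3 p ae ad * (be.1 - p.1) = 0 by rewrite h c0 in i1; lra.
  have j2 : det3 p ae ad * (be.2 - p.2) = 0 by rewrite h c0 in i2; lra.
  move/eqP: j1; rewrite mulf_eq0 (negPf n') /= subr_eq0 => /eqP i1'.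
  move/eqP: j2; rewrite mulf_eq0 (negPf n') /= subr_eq0 => /eqP i2'.
  by move: pbe; rewrite (_ : p = be) ?eqxx //; apply: pairE.
- have i1 : det3 p ae ad * (ae.1 - be.1) + (det3 ad ae be - det3 p ae be) * (ae.1 - p.1) + det3 p ae be * (ad.1 - p.1) = 0
    by rewrite /det3; ring.
  have i2 : det3 p ae ad * (ae.2 - be.2) + (det3 ad ae be - det3 p ae be) * (ae.2 - p.2) + det3 p ae be * (ad.2 - p.2) = 0
    by rewrite /det3; ring.
  have j1 : det3 p ae ad * (ae.1 - be.1) = 0 by rewrite h c0 in i1; lra.
  have j2 : det3 p ae ad * (ae.2 - be.2) = 0 by rewrite h c0 in i2; lra.
  move/eqP: j1; rewrite mulf_eq0 (negPf n') /= subr_eq0 => /eqP i1'.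
  move/eqP: j2; rewrite mulf_eq0 (negPf n') /= subr_eq0 => /eqP i2'.
  by move: aebe; rewrite (_ : ae = be) ?eqxx //; apply: pairE.
Qed.

End Geo4.

Section Geo5.
Variable R : realType.
Implicit Types (u v w x y z q d : plane R) (S : set (plane R)).

Lemma absM_le (et K k c : R) : 0 <= et -> `|k| <= K -> et * K <= c -> - c <= et * k /\ et * k <= c.
Proof.
move=> e0 hk h.
have : `|et * k| <= c by rewrite normrM (ger0_norm e0); apply: le_trans h; apply: ler_wpM2l.
by rewrite ler_norml => /andP[].
Qed.

Lemma abs_le (x : R) : - `|x| <= x /\ x <= `|x|.
Proof. by split; [rewrite lerNl; have := ler_norm (- x); rewrite normrN | exact: ler_norm]. Qed.

Lemma pos_or (x : R) : 0 < `|x| + (x == 0)%:R.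
Proof. by have [->|h] := eqVneq x 0; rewrite ?normr0 ?add0r ?ltr01 // addr0 normr_gt0. Qed.

Lemma pos_orE (x : R) : x != 0 -> `|x| + (x == 0)%:R = `|x|.
Proof. by move/negPf => ->; rewrite addr0. Qed.

Lemma sabs (s x : R) : (s = 1 \/ s = -1) -> 0 < s * x -> s * x = `|x|.
Proof.
case=> -> h; first by rewrite mul1r in h *; rewrite gtr0_norm.
by rewrite mulN1r in h *; rewrite ltr0_norm // -oppr_gt0.
Qed.

Lemma sabs' (s x : R) : (s = 1 \/ s = -1) -> s * x < 0 -> s * x = - `|x|.
Proof.
case=> -> h; first by rewrite mul1r in h *; rewrite ltr0_norm ?opprK.
by rewrite mulN1r in h *; rewrite gtr0_norm // -oppr_lt0.
Qed.

Lemma s_abs (s x : R) : (s = 1 \/ s = -1) -> `|s * x| = `|x|.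
Proof. by case=> ->; rewrite ?mul1r ?mulN1r ?normrN. Qed.

Lemma tcl_all_s q u v w (s : R) : (s = 1 \/ s = -1) ->
  0 < s * det3 q u v -> 0 < s * det3 q v w -> 0 < s * det3 q w u -> tcl q u v w = s.
Proof.
case=> -> h1 h2 h3; rewrite ?mul1r ?mulN1r ?oppr_gt0 in h1 h2 h3.
  exact: tcl_allpos.
exact: tcl_allneg.
Qed.

Lemma tcl_all_ns q u v w (s : R) : (s = 1 \/ s = -1) ->
  s * det3 q u v < 0 -> s * det3 q v w < 0 -> s * det3 q w u < 0 -> tcl q u v w = - s.
Proof.
case=> -> h1 h2 h3; rewrite ?mul1r ?mulN1r ?oppr_lt0 in h1 h2 h3.
  exact: tcl_allneg.
by rewrite opprK; exact: tcl_allpos.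
Qed.

Lemma absM_n (et K k c : R) : 0 <= et -> `|k| <= K -> et * K <= c -> `|et * k| <= c.
Proof. by move=> e0 hk h; rewrite normrM (ger0_norm e0); apply: le_trans h; apply: ler_wpM2l. Qed.

Lemma nz_dom (a b : R) : `|b| < `|a| -> a + b != 0.
Proof.
move=> h; apply/eqP => e; have eb : b = - a by lra.
by rewrite eb normrN ltxx in h.
Qed.

Lemma sprod (s x y : R) : (s = 1 \/ s = -1) -> 0 < s * x -> s * y < 0 -> x * y < 0.
Proof. by case=> -> h1 h2; rewrite ?mul1r ?mulN1r ?oppr_gt0 ?oppr_lt0 in h1 h2; nra. Qed.


Lemma pick_t (e0 K0 bt M : R) : 0 < e0 -> 0 < K0 -> 0 < bt -> 0 < M ->
  exists2 t : R, 0 < t & [/\ t <= 1/4, t * K0 < e0 & t * M <= bt / 4].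
Proof.
move=> e00 K00 bt0 M0.
have [t t0 [tA tB tC _]] := @small4 _ (1/4) (e0 / (2 * K0)) (bt / (4 * M)) 1
  (ltac:(lra)) (ltac:(apply: divr_gt0; lra)) (ltac:(apply: divr_gt0; lra)) ltr01.
rewrite ler_pdivlMr in tB; last lra.
rewrite ler_pdivlMr in tC; last lra.
exists t => //; split => //; lra.
Qed.

Lemma pick_et (e1 Kd cc Kc ce Ke : R) : 0 < e1 -> 0 < Kd -> 0 < cc -> 0 < Kc -> 0 < ce -> 0 < Ke ->
  exists2 et : R, 0 < et & [/\ et <= 1/2, et * Kd < e1, et * Kc <= cc / 4 & et * Ke <= ce / 2].
Proof.
move=> e10 Kd0 cc0 Kc0 ce0 Ke0.
have [et et0 [eA eB eC eD]] := @small4 _ (1/2) (e1 / (2 * Kd)) (cc / (4 * Kc)) (ce / (2 * Ke))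
  (ltac:(lra)) (ltac:(apply: divr_gt0; lra)) (ltac:(apply: divr_gt0; lra)) (ltac:(apply: divr_gt0; lra)).
rewrite ler_pdivlMr in eB; last lra.
rewrite ler_pdivlMr in eC; last lra.
rewrite ler_pdivlMr in eD; last lra.
exists et => //; split => //; lra.
Qed.

Lemma qbox1 (a d t et K0 l : R) : 0 < t -> 0 < et -> et <= 1 -> `|a| + `|d| <= K0 -> 0 <= l -> l <= 1 ->
  `|(1 - l) * t * (a + et * d)| <= t * K0.
Proof.
move=> t0 et0 et1 hK l0 l1.
rewrite normrM normrM (ger0_norm (ltW t0)) ger0_norm; last lra.
have h1 : `|a + et * d| <= K0.
  apply: (le_trans (ler_normD _ _)); rewrite normrM (gtr0_norm et0).
  have := normr_ge0 d; nra.
have h2 : 0 <= t * `|a + et * d| by apply: mulr_ge0; [lra|exact: normr_ge0].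
have h3 : t * `|a + et * d| <= t * K0 by apply: ler_wpM2l => //; lra.
rewrite -mulrA; nra.
Qed.

Lemma qbox (p ae ad : plane R) (t et K0 : R) : 0 < t -> 0 < et -> et <= 1 ->
  K0 = `|ae.1 - p.1| + `|ae.2 - p.2| + `|ad.1 - p.1| + `|ad.2 - p.2| + 1 ->
  forall l, 0 <= l -> l <= 1 ->
  `|(cmb l (qf p ae ad t et) p).1 - p.1| <= t * K0 /\ `|(cmb l (qf p ae ad t et) p).2 - p.2| <= t * K0.
Proof.
move=> t0 et0 et1 hK l l0 l1; rewrite /cmb /qf /=; split.
- have -> : (1 - l) * (p.1 + t * (ae.1 - p.1) + t * et * (ad.1 - p.1)) + l * p.1 - p.1 =
             (1 - l) * t * ((ae.1 - p.1) + et * (ad.1 - p.1)) by ring.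
  apply: qbox1 => //; rewrite hK.
  by have := normr_ge0 (ae.2 - p.2); have := normr_ge0 (ad.2 - p.2); lra.
- have -> : (1 - l) * (p.2 + t * (ae.2 - p.2) + t * et * (ad.2 - p.2)) + l * p.2 - p.2 =
             (1 - l) * t * ((ae.2 - p.2) + et * (ad.2 - p.2)) by ring.
  apply: qbox1 => //; rewrite hK.
  by have := normr_ge0 (ae.1 - p.1); have := normr_ge0 (ad.1 - p.1); lra.
Qed.

Lemma qnD1 (t et d Kd : R) : 0 < t -> t <= 1 -> 0 < et -> `|d| <= Kd -> `|t * (et * d)| <= et * Kd.
Proof.
move=> t0 t1 et0 hd; rewrite normrM (gtr0_norm t0) normrM (gtr0_norm et0).
have h2 : 0 <= et * `|d| by apply: mulr_ge0; [lra|exact: normr_ge0].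
have h3 : et * `|d| <= et * Kd by apply: ler_wpM2l => //; lra.
nra.
Qed.

Lemma qnD (p ae ad : plane R) (t et Kd : R) : 0 < t -> t <= 1 -> 0 < et ->
  Kd = `|ad.1 - p.1| + `|ad.2 - p.2| + 1 ->
  `|(qf p ae ad t et).1 - (cmb t p ae).1| <= et * Kd /\ `|(qf p ae ad t et).2 - (cmb t p ae).2| <= et * Kd.
Proof.
move=> t0 t1 et0 hK; rewrite /qf /cmb /=; split.
- have -> : p.1 + t * (ae.1 - p.1) + t * et * (ad.1 - p.1) - ((1 - t) * p.1 + t * ae.1) = t * (et * (ad.1 - p.1)) by ring.
  by apply: qnD1 => //; rewrite hK; have := normr_ge0 (ad.2 - p.2); lra.
- have -> : p.2 + t * (ae.2 - p.2) + t * et * (ad.2 - p.2) - ((1 - t) * p.2 + t * ae.2) = t * (et * (ad.2 - p.2)) by ring.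
  by apply: qnD1 => //; rewrite hK; have := normr_ge0 (ad.1 - p.1); lra.
Qed.

Lemma qT1 (p ae ad : plane R) (t et s : R) : (s = 1 \/ s = -1) -> 0 < s * det3 ae p ad ->
  0 < t -> 0 < et -> t <= 1/4 -> et <= 1/2 ->
  tcl (qf p ae ad t et) ae ad p = - s /\ det3 (qf p ae ad t et) p ae != 0.
Proof.
move=> hs sD t0 et0 t1 et1.
have E1 : det3 (qf p ae ad t et) ae ad = (1 - t - t * et) * (- det3 ae p ad) by rewrite /det3 /qf /=; ring.
have E2 : det3 (qf p ae ad t et) ad p = t * (- det3 ae p ad) by rewrite /det3 /qf /=; ring.
have E3 : det3 (qf p ae ad t et) p ae = (t * et) * (- det3 ae p ad) by rewrite /det3 /qf /=; ring.
move: sD; set Dl := det3 ae p ad => sD.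
have w0 : 0 < 1 - t - t * et by nra.
have tet0 : 0 < t * et by apply: mulr_gt0.
split.
  apply: tcl_all_ns => //; [rewrite E1|rewrite E2|rewrite E3].
  - have -> : s * ((1 - t - t * et) * - Dl) = - ((1 - t - t * et) * (s * Dl)) by ring.
    by rewrite oppr_lt0; apply: mulr_gt0.
  - have -> : s * (t * - Dl) = - (t * (s * Dl)) by ring.
    by rewrite oppr_lt0; apply: mulr_gt0.
  - have -> : s * ((t * et) * - Dl) = - ((t * et) * (s * Dl)) by ring.
    by rewrite oppr_lt0; apply: mulr_gt0.
rewrite E3 mulf_neq0 ?oppr_eq0 ?(gt_eqF tet0) //; apply/eqP => e; by move: sD; rewrite /Dl e mulr0 ltxx.
Qed.

End Geo5.

Section Geo6.
Variable R : realType.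
Implicit Types (u v w x y z q d : plane R) (S : set (plane R)).

Lemma qcaseI (p ae ad be : plane R) (t et : R) : det3 p ae be = 0 -> det3 ad be p != 0 -> det3 ad ae be != 0 ->
  0 < t -> 0 < et ->
  [/\ det3 (qf p ae ad t et) ae be != 0, det3 (qf p ae ad t et) be p != 0 & tcl (qf p ae ad t et) ae p be = 0].
Proof.
move=> c0 k1 k2 t0 et0.
have tet0 : t * et != 0 by rewrite mulf_neq0 ?gt_eqF.
split.
- have -> : det3 (qf p ae ad t et) ae be = (1 - t - t * et) * det3 p ae be + (t * et) * det3 ad ae be
    by rewrite /det3 /qf /=; ring.
  by rewrite c0 mulr0 add0r mulf_neq0.
- have -> : det3 (qf p ae ad t et) be p = t * det3 p ae be + (t * et) * det3 ad be p
    by rewrite /det3 /qf /=; ring.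
  by rewrite c0 mulr0 add0r mulf_neq0.
- have e : det3 ae p be = - det3 p ae be by rewrite /det3; ring.
  by apply: tcl_degen; rewrite e c0 oppr0.
Qed.

Lemma qcaseII (p ae ad be : plane R) (t et s Kc : R) : (s = 1 \/ s = -1) ->
  0 < s * det3 p ae be -> 0 < s * det3 ae p ad -> 0 < t -> t <= 1/4 -> 0 < et -> et <= 1/2 ->
  Kc = `|det3 ad p be| + `|det3 ad ae be| + 1 -> et * Kc <= `|det3 p ae be| / 4 ->
  [/\ det3 (qf p ae ad t et) ae be != 0, det3 (qf p ae ad t et) be p != 0 & tcl (qf p ae ad t et) ae p be = 0].
Proof.
move=> hs sc sD t0 t1 et0 et1 hK hc.
have E7 : det3 (qf p ae ad t et) ae be = (1 - t - t * et) * det3 p ae be + t * (et * det3 ad ae be)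
  by rewrite /det3 /qf /=; ring.
have E8 : det3 (qf p ae ad t et) be p = t * (det3 p ae be + et * det3 ad be p)
  by rewrite /det3 /qf /=; ring.
have E4 : det3 (qf p ae ad t et) ae p = (t * et) * det3 ae p ad by rewrite /det3 /qf /=; ring.
have E5 : s * det3 (qf p ae ad t et) p be = t * (- (s * det3 p ae be) + s * (et * det3 ad p be))
  by rewrite /det3 /qf /=; ring.
have F2 : det3 ad be p = - det3 ad p be by rewrite /det3; ring.
move: sc sD hc E7 E8 E4 E5; set c := det3 p ae be; set k1 := det3 ad p be; set k9 := det3 ad ae be;
  set Dl := det3 ae p ad => sc sD hc E7 E8 E4 E5.
rewrite F2 -/k1 in E8.
have cabs : s * c = `|c| by apply: sabs.
have cp : 0 < `|c| by lra.
have bk1 : `|et * k1| <= `|c| / 4.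
  apply: (absM_n (ltW et0) (_ : `|k1| <= Kc)); [rewrite hK; have := normr_ge0 k9; lra|lra].
have bk9 : `|et * k9| <= `|c| / 4.
  apply: (absM_n (ltW et0) (_ : `|k9| <= Kc)); [rewrite hK; have := normr_ge0 k1; lra|lra].
have w0 : 5/8 <= 1 - t - t * et by nra.
split.
- rewrite E7; apply: nz_dom.
  have h1 : `|t * (et * k9)| <= `|c| / 16.
    by rewrite normrM (gtr0_norm t0); have := normr_ge0 (et * k9); nra.
  have h2 : 5/8 * `|c| <= `|(1 - t - t * et) * c|.
    by rewrite normrM (ger0_norm (_ : 0 <= 1 - t - t * et)); [nra|lra].
  lra.
- rewrite E8 mulf_neq0 ?(gt_eqF t0) //; apply: nz_dom; rewrite mulrN normrN; lra.
- apply: tcl_mixed1; apply: (@sprod _ s) => //.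
    by rewrite E4 mulrA (mulrC s) -mulrA; apply: mulr_gt0 => //; apply: mulr_gt0.
  rewrite E5 cabs; have [l1 u1] := abs_le (s * (et * k1)); rewrite s_abs // in l1 u1.
  by rewrite pmulr_rlt0 //; lra.
Qed.

Lemma qcaseIII (p ae ad be bd : plane R) (t et s Kc Ke M : R) : (s = 1 \/ s = -1) ->
  s * det3 p ae be < 0 -> 0 < s * det3 p ae bd -> 0 < s * det3 ae p ad -> 0 < s * det3 p be bd ->
  0 < t -> t <= 1/4 -> 0 < et -> et <= 1/2 ->
  Kc = `|det3 ad p be| + `|det3 ad ae be| + 1 -> et * Kc <= `|det3 p ae be| / 4 ->
  Ke = `|det3 ad p bd| + 1 -> et * Ke <= `|det3 p ae bd| / 2 ->
  M = `|det3 ae bd be| + `|det3 ad bd be| + 1 -> t * M <= `|det3 p be bd| / 4 ->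
  [/\ det3 (qf p ae ad t et) ae be != 0, det3 (qf p ae ad t et) be p != 0,
      tcl (qf p ae ad t et) ae p be = s & tcl (qf p ae ad t et) p bd be = - s].
Proof.
move=> hs sc se sD sb t0 t1 et0 et1 hKc hc hKe he hM hm.
have E7 : det3 (qf p ae ad t et) ae be = (1 - t - t * et) * det3 p ae be + t * (et * det3 ad ae be)
  by rewrite /det3 /qf /=; ring.
have E8 : s * det3 (qf p ae ad t et) be p = t * (s * det3 p ae be - s * (et * det3 ad p be))
  by rewrite /det3 /qf /=; ring.
have E8' : det3 (qf p ae ad t et) be p = t * (det3 p ae be - et * det3 ad p be)
  by rewrite /det3 /qf /=; ring.
have E4 : s * det3 (qf p ae ad t et) ae p = (t * et) * (s * det3 ae p ad) by rewrite /det3 /qf /=; ring.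
have E5 : s * det3 (qf p ae ad t et) p be = t * (- (s * det3 p ae be) + s * (et * det3 ad p be))
  by rewrite /det3 /qf /=; ring.
have E6 : s * det3 (qf p ae ad t et) be ae =
    (1 - t - t * et) * (- (s * det3 p ae be)) - t * (s * (et * det3 ad ae be))
  by rewrite /det3 /qf /=; ring.
have E9 : s * det3 (qf p ae ad t et) p bd = t * (- (s * det3 p ae bd) + s * (et * det3 ad p bd))
  by rewrite /det3 /qf /=; ring.
have E10 : s * det3 (qf p ae ad t et) bd be =
   - ((1 - t - t * et) * (s * det3 p be bd)) + t * (s * det3 ae bd be) + t * (s * (et * det3 ad bd be))
  by rewrite /det3 /qf /=; ring.
move: sc se sD sb hc he hm E7 E8 E8' E4 E5 E6 E9 E10.
set c := det3 p ae be; set ee := det3 p ae bd; set k1 := det3 ad p be; set k9 := det3 ad ae be;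
  set Dl := det3 ae p ad; set b := det3 p be bd; set k5 := det3 ad p bd; set k6 := det3 ae bd be;
  set k7 := det3 ad bd be.
move=> sc se sD sb hc he hm E7 E8 E8' E4 E5 E6 E9 E10.
have cabs : s * c = - `|c| by apply: sabs'.
have eabs : s * ee = `|ee| by apply: sabs.
have babs : s * b = `|b| by apply: sabs.
have cp : 0 < `|c| by rewrite normr_gt0; apply/eqP => e; move: sc; rewrite e mulr0 ltxx.
have ep : 0 < `|ee| by lra.
have bp : 0 < `|b| by lra.
have bk1 : `|et * k1| <= `|c| / 4.
  apply: (absM_n (ltW et0) (_ : `|k1| <= Kc)); [rewrite hKc; have := normr_ge0 k9; lra|lra].
have bk9 : `|et * k9| <= `|c| / 4.
  apply: (absM_n (ltW et0) (_ : `|k9| <= Kc)); [rewrite hKc; have := normr_ge0 k1; lra|lra].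
have bk5 : `|et * k5| <= `|ee| / 2.
  apply: (absM_n (ltW et0) (_ : `|k5| <= Ke)); [rewrite hKe; lra|lra].
have bk7 : `|et * k7| <= `|k7|.
  by rewrite normrM (gtr0_norm et0); have := normr_ge0 k7; nra.
have [l1 u1] := abs_le (s * (et * k1)); rewrite s_abs // in l1 u1.
have [l9 u9] := abs_le (s * (et * k9)); rewrite s_abs // in l9 u9.
have [l5 u5] := abs_le (s * (et * k5)); rewrite s_abs // in l5 u5.
have [l6 u6] := abs_le (s * k6); rewrite s_abs // in l6 u6.
have [l7 u7] := abs_le (s * (et * k7)); rewrite s_abs // in l7 u7.
have w0 : 5/8 <= 1 - t - t * et by nra.
split.
- rewrite E7; apply: nz_dom.
  have h1 : `|t * (et * k9)| <= `|c| / 16.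
    by rewrite normrM (gtr0_norm t0); have := normr_ge0 (et * k9); nra.
  have h2 : 5/8 * `|c| <= `|(1 - t - t * et) * c|.
    by rewrite normrM (ger0_norm (_ : 0 <= 1 - t - t * et)); [nra|lra].
  lra.
- rewrite E8' mulf_neq0 ?(gt_eqF t0) //; apply: nz_dom; rewrite normrN; lra.
- apply: tcl_all_s => //.
  + by rewrite E4; apply: mulr_gt0 => //; apply: mulr_gt0.
  + by rewrite E5 cabs opprK pmulr_rgt0 //; lra.
  + rewrite E6 cabs opprK.
    have : t * (s * (et * k9)) <= `|c| / 16 by nra.
    nra.
- apply: tcl_all_ns => //.
  + by rewrite E9 eabs pmulr_rlt0 //; lra.
  + rewrite E10 babs.
    have h1 : t * (s * k6) + t * (s * (et * k7)) <= `|b| / 4.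
      have : t * (`|k6| + `|k7|) <= `|b| / 4 by rewrite hM in hm; have := ler_norm (et * k7); nra.
      nra.
    nra.
  + by rewrite E8 cabs pmulr_rlt0 //; lra.
Qed.

End Geo6.

Section Geo7.
Variable R : realType.
Implicit Types (u v w x y z q d : plane R) (S : set (plane R)).

Lemma level1 A B C D (ab ad bd ae be p : plane R) (s : R) :
  pconvex A -> pconvex B -> pconvex D ->
  closed A -> closed B -> closed C -> closed D ->
  A ab -> B ab -> A ad -> D ad -> B bd -> D bd -> A ae -> B be -> D p ->
  ~ A p -> ~ B p -> ~ C p -> p != be -> ae != be ->
  (s = 1 \/ s = -1) ->
  0 < s * det3 ae p ad -> 0 < s * det3 p be bd -> 0 < s * det3 be ae ab ->
  (forall t, 0 < t -> t <= 1 -> ~ D (cmb t p ae)) ->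
  (det3 p ae be = 0 \/ 0 < s * det3 p ae be \/ (s * det3 p ae be < 0 /\ 0 < s * det3 p ae bd)) ->
  exists q, [/\ ~ D q,
    (forall l, 0 <= l -> l <= 1 -> [/\ ~ A (cmb l q p), ~ B (cmb l q p) & ~ C (cmb l q p)]) &
    tcl q ab ad bd != 0].
Proof.
move=> cA cB cD clA clB clC clD Aab Bab Aad Dad Bbd Dbd Aae Bbe Dp nAp nBp nCp pbe aebe hs o1 o2 o3 hexit hcase.
have [e0 e00 hbox] := box3 clA clB clC nAp nBp nCp.
have [K0 hK0 K00] : exists2 K0 : R, K0 = `|ae.1 - p.1| + `|ae.2 - p.2| + `|ad.1 - p.1| + `|ad.2 - p.2| + 1 & 0 < K0.
  by eexists; first reflexivity; have := normr_ge0 (ae.1 - p.1); have := normr_ge0 (ae.2 - p.2);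
    have := normr_ge0 (ad.1 - p.1); have := normr_ge0 (ad.2 - p.2); lra.
have bt0 : 0 < `|det3 p be bd| by rewrite normr_gt0; apply/eqP => e; move: o2; rewrite e mulr0 ltxx.
have [M hM M0] : exists2 M : R, M = `|det3 ae bd be| + `|det3 ad bd be| + 1 & 0 < M.
  by eexists; first reflexivity; have := normr_ge0 (det3 ae bd be); have := normr_ge0 (det3 ad bd be); lra.
have [t t0 [tA tB tC]] := pick_t e00 K00 bt0 M0.
have q0nD : ~ D (cmb t p ae) by apply: hexit => //; lra.
have [e1 e10 hbox1] := boxPl clD q0nD.
have [Kd hKd Kd0] : exists2 Kd : R, Kd = `|ad.1 - p.1| + `|ad.2 - p.2| + 1 & 0 < Kd.
  by eexists; first reflexivity; have := normr_ge0 (ad.1 - p.1); have := normr_ge0 (ad.2 - p.2); lra.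
have [Kc hKc Kc0] : exists2 Kc : R, Kc = `|det3 ad p be| + `|det3 ad ae be| + 1 & 0 < Kc.
  by eexists; first reflexivity; have := normr_ge0 (det3 ad p be); have := normr_ge0 (det3 ad ae be); lra.
have [Ke hKe Ke0] : exists2 Ke : R, Ke = `|det3 ad p bd| + 1 & 0 < Ke.
  by eexists; first reflexivity; have := normr_ge0 (det3 ad p bd); lra.
have [et et0 [eA eB eC eD]] := pick_et e10 Kd0 (pos_or (det3 p ae be)) Kc0 (pos_or (det3 p ae bd)) Ke0.
pose q := qf p ae ad t et.
have hboxq : forall l, 0 <= l -> l <= 1 -> [/\ ~ A (cmb l q p), ~ B (cmb l q p) & ~ C (cmb l q p)].
  move=> l l0 l1; have [h1 h2] := qbox t0 et0 (ltac:(lra)) hK0 l0 l1.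
  by apply: hbox; lra.
have q0 : cmb 0 q p = q by apply: pairE; rewrite /cmb /=; ring.
have [nAq nBq nCq] := hboxq 0 (lexx 0) ler01; rewrite q0 in nAq nBq nCq.
have nDq : ~ D q.
  have [h1 h2] := qnD ae t0 (ltac:(lra)) et0 hKd.
  by apply: hbox1; rewrite /q; lra.
exists q; split => //.
have [T1 n2] := qT1 hs o1 t0 et0 tA eA.
case: hcase => [c0|[cpos|[cneg epos]]].
- have nDl : det3 ae p ad != 0 by apply/eqP => ez; move: o1; rewrite ez mulr0 ltxx.
  have [k1 k2] := caseI_nd c0 nDl pbe aebe.
  have [n1 n3 T2] := @qcaseI _ p ae ad be t et c0 k1 k2 t0 et0.
  apply: (hexABD cA cB cD Aab Bab Aad Dad Bbd Dbd Aae Bbe Dp nAq nBq nDq hs o3 o2 n1 n2 n3 T1).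
  by left.
- have cn0 : det3 p ae be != 0 by apply/eqP => e; move: cpos; rewrite e mulr0 ltxx.
  rewrite pos_orE // in eC.
  have [n1 n3 T2] := qcaseII hs cpos o1 t0 tA et0 eA hKc eC.
  apply: (hexABD cA cB cD Aab Bab Aad Dad Bbd Dbd Aae Bbe Dp nAq nBq nDq hs o3 o2 n1 n2 n3 T1).
  by left.
- have cn0 : det3 p ae be != 0 by apply/eqP => e; move: cneg; rewrite e mulr0 ltxx.
  have en0 : det3 p ae bd != 0 by apply/eqP => e; move: epos; rewrite e mulr0 ltxx.
  rewrite pos_orE // in eC; rewrite pos_orE // in eD.
  have [n1 n3 T2 T3] := qcaseIII hs cneg epos o1 o2 t0 tA et0 eA hKc eC hKe eD hM tC.
  apply: (hexABD cA cB cD Aab Bab Aad Dad Bbd Dbd Aae Bbe Dp nAq nBq nDq hs o3 o2 n1 n2 n3 T1).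
  by right.
Qed.

End Geo7.

Section Geo8.
Variable R : realType.
Implicit Types (u v w x y z q d : plane R) (S : set (plane R)).

Lemma cmb_diff (t ts : R) (p0 a : plane R) :
  (cmb t p0 a).1 - (cmb ts p0 a).1 = (t - ts) * (a.1 - p0.1) /\
  (cmb t p0 a).2 - (cmb ts p0 a).2 = (t - ts) * (a.2 - p0.2).
Proof. by rewrite /cmb /=; split; ring. Qed.

Lemma exitP (D : set (plane R)) (p0 a : plane R) : closed D -> D p0 -> ~ D a ->
  exists ts : R, [/\ 0 <= ts, ts < 1, D (cmb ts p0 a) & forall t, ts < t -> t <= 1 -> ~ D (cmb t p0 a)].
Proof.
move=> clD Dp0 na.
pose S := [set t : R | 0 <= t /\ t <= 1 /\ D (cmb t p0 a)].
have c0 : cmb 0 p0 a = p0 by apply: pairE; rewrite /cmb /=; ring.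
have c1 : cmb 1 p0 a = a by apply: pairE; rewrite /cmb /=; ring.
have S0 : S 0 by split; [exact: lexx|split; [exact: ler01|rewrite c0]].
have hsup : has_sup S by split; [exists 0 | exists 1 => t [_ [t1 _]]].
have ub : forall t, S t -> t <= sup S by move=> t St; exact: sup_upper_bound hsup _ St.
have ts0 : 0 <= sup S by exact: ub.
have ts1 : sup S <= 1 by apply: ge_sup; [exists 0 | move=> t [_ [t1 _]]].
have after : forall t, sup S < t -> t <= 1 -> ~ D (cmb t p0 a).
  by move=> t h1 h2 Dt; have := ub t (conj (ltW (le_lt_trans ts0 h1)) (conj h2 Dt)); lra.
have Dts : D (cmb (sup S) p0 a).
  have [//|nD] := pselect (D (cmb (sup S) p0 a)).
  have [e e0 he] := boxPl clD nD.
  pose K := `|a.1 - p0.1| + `|a.2 - p0.2| + 1.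
  have K0 : 0 < K by rewrite /K; have := normr_ge0 (a.1 - p0.1); have := normr_ge0 (a.2 - p0.2); lra.
  have [t St ht] := sup_adherent (divr_gt0 e0 K0) hsup.
  have tle := ub t St.
  case: St => _ [_ Dt].
  have [d1 d2] := cmb_diff t (sup S) p0 a.
  have hd : `|t - sup S| * K < e.
    rewrite distrC ger0_norm; last lra.
    by rewrite -ltr_pdivlMr //; lra.
  have hK1 : `|a.1 - p0.1| <= K by rewrite /K; have := normr_ge0 (a.2 - p0.2); lra.
  have hK2 : `|a.2 - p0.2| <= K by rewrite /K; have := normr_ge0 (a.1 - p0.1); lra.
  have n0 := normr_ge0 (t - sup S).
  exfalso; apply: (he _ _ _ Dt).
  - rewrite d1 normrM; apply: (le_lt_trans _ hd); exact: ler_wpM2l.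
  - rewrite d2 normrM; apply: (le_lt_trans _ hd); exact: ler_wpM2l.
have ts_lt1 : sup S < 1.
  rewrite lt_neqAle ts1 andbT; apply/eqP => e; apply: na; rewrite -c1 -e //.
by exists (sup S); split.
Qed.

Lemma div_pos_same (x y : R) : 0 < x * y -> 0 < x / y.
Proof.
move=> h; have [y0|y0|y0] := ltgtP y 0.
- have x0 : x < 0 by nra.
  by rewrite -mulrNN -invrN; apply: divr_gt0; lra.
- by apply: divr_gt0 => //; nra.
- by move: h; rewrite y0 mulr0 ltxx.
Qed.

Lemma div_nneg_same (x y : R) : 0 <= x * y -> y != 0 -> 0 <= x / y.
Proof.
move=> h yn; have [y0|y0|y0] := ltgtP y 0.
- have x0 : x <= 0 by nra.
  by rewrite -mulrNN -invrN; apply: divr_ge0; lra.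
- by apply: divr_ge0; nra.
- by rewrite y0 eqxx in yn.
Qed.

Lemma restart (D E : set (plane R)) (p ae be bd : plane R) (s : R) :
  pconvex D -> pconvex E -> D p -> E p -> E ae -> E be -> D bd -> ~ E bd -> (s = 1 \/ s = -1) ->
  0 < s * det3 p be bd -> s * det3 p ae be < 0 -> s * det3 p ae bd <= 0 ->
  exists2 l : R, 0 <= l <= 1 & D (cmb l ae be).
Proof.
move=> cD cE Dp Ep Eae Ebe Dbd nEbd hs sb sc se.
have e1 : det3 p bd be = - det3 p be bd by rewrite /det3; ring.
have cn0 : det3 p ae be != 0 by apply/eqP => e; move: sc; rewrite e mulr0 ltxx.
have g0 : 0 < det3 p bd be / det3 p ae be.
  by apply: div_pos_same; rewrite e1; case: hs => es; rewrite es in sb sc; nra.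
have dl0 : 0 <= det3 p ae bd / det3 p ae be.
  by apply: div_nneg_same => //; case: hs => es; rewrite es in sc se; nra.
move: g0 dl0; set g := det3 p bd be / det3 p ae be; set dl := det3 p ae bd / det3 p ae be => g0 dl0.
have hb1 : bd.1 = p.1 + g * (ae.1 - p.1) + dl * (be.1 - p.1).
  rewrite /g /dl; apply: (mulfI cn0); move: cn0; rewrite /det3 => cn0; field.
  exact: cn0.
have hb2 : bd.2 = p.2 + g * (ae.2 - p.2) + dl * (be.2 - p.2).
  rewrite /g /dl; apply: (mulfI cn0); move: cn0; rewrite /det3 => cn0; field.
  exact: cn0.
clearbody g dl.
have gd0 : 0 < g + dl by lra.
have gdn : g + dl != 0 by rewrite gt_eqF.
have l01 : 0 <= dl / (g + dl) <= 1.
  apply/andP; split; first by apply: divr_ge0; lra.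
  by rewrite ler_pdivrMr // mul1r; lra.
have [gd1|gd1] := lerP (g + dl) 1.
  exfalso; apply: nEbd.
  have := @cvx_cmb _ E p (cmb (dl / (g + dl)) ae be) (g + dl) cE Ep
    (ltac:(case/andP: l01 => l0 l1; exact: cvx_cmb)) (ltac:(lra)) gd1.
  have -> : cmb (g + dl) p (cmb (dl / (g + dl)) ae be) = bd.
    by apply: pairE; rewrite /cmb /= ?hb1 ?hb2; field.
  done.
exists (dl / (g + dl)) => //.
have -> : cmb (dl / (g + dl)) ae be = cmb (1 / (g + dl)) p bd.
  by apply: pairE; rewrite /cmb /= ?hb1 ?hb2; field.
apply: cvx_cmb => //; first by apply: divr_ge0; lra.
by rewrite ler_pdivrMr // mul1r; lra.
Qed.


Lemma exit2 (D E : set (plane R)) (p0 a : plane R) : closed D -> pconvex E -> D p0 -> E p0 -> ~ D a -> E a ->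
  exists2 p : plane R, (D p /\ E p) /\ (exists2 ts : R, 0 <= ts <= 1 & p = cmb ts p0 a) &
    forall t, 0 < t -> t <= 1 -> ~ D (cmb t p a).
Proof.
move=> clD cE Dp0 Ep0 na Ea.
have [ts [ts0 ts1 Dts after]] := exitP clD Dp0 na.
exists (cmb ts p0 a).
  split; last by exists ts => //; apply/andP; split; lra.
  by split => //; apply: cvx_cmb => //; lra.
move=> t t0 t1.
have -> : cmb t (cmb ts p0 a) a = cmb (ts + t * (1 - ts)) p0 a by apply: pairE; rewrite /cmb /=; ring.
by apply: after; nra.
Qed.

Lemma find_good A B C D E (ab ad bd ae be p0 : plane R) (s : R) :
  pconvex A -> pconvex B -> pconvex D -> pconvex E ->
  closed A -> closed B -> closed C -> closed D ->
  A ab -> B ab -> A ad -> D ad -> B bd -> D bd -> A ae -> E ae -> B be -> E be -> D p0 -> E p0 ->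
  tfree A D E -> tfree B D E -> tfree C D E -> tfree A B E ->
  (s = 1 \/ s = -1) ->
  (forall p, D p -> E p -> 0 < s * det3 ae p ad) -> (forall p, D p -> E p -> 0 < s * det3 p be bd) ->
  0 < s * det3 be ae ab ->
  exists p1, exists q, [/\ D p1 /\ E p1, ~ D q,
    (forall l, 0 <= l -> l <= 1 -> [/\ ~ A (cmb l q p1), ~ B (cmb l q p1) & ~ C (cmb l q p1)]) &
    tcl q ab ad bd != 0].
Proof.
move=> cA cB cD cE clA clB clC clD Aab Bab Aad Dad Bbd Dbd Aae Eae Bbe Ebe Dp0 Ep0 tADE tBDE tCDE tABE hs oDAE oBDE o3.
have naeD : ~ D ae by move=> h; apply: (tADE ae).
have aebe : ae != be by apply/eqP => e; apply: (tABE ae) => //; rewrite e.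
have nEbd : ~ E bd by move=> h; apply: (tBDE bd).
have atp : forall p, D p -> E p -> (forall t, 0 < t -> t <= 1 -> ~ D (cmb t p ae)) ->
    (det3 p ae be = 0 \/ 0 < s * det3 p ae be \/ (s * det3 p ae be < 0 /\ 0 < s * det3 p ae bd)) ->
    exists p1, exists q, [/\ D p1 /\ E p1, ~ D q,
    (forall l, 0 <= l -> l <= 1 -> [/\ ~ A (cmb l q p1), ~ B (cmb l q p1) & ~ C (cmb l q p1)]) &
    tcl q ab ad bd != 0].
  move=> p Dp Ep hex hc.
  have pbe : p != be by apply/eqP => e; apply: (tBDE be) => //; rewrite -e.
  have [q [h1 h2 h3]] := level1 cA cB cD clA clB clC clD Aab Bab Aad Dad Bbd Dbd Aae Bbe Dp
    (fun h => tADE p h Dp Ep) (fun h => tBDE p h Dp Ep) (fun h => tCDE p h Dp Ep) pbe aebe hs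
    (oDAE p Dp Ep) (oBDE p Dp Ep) o3 hex hc.
  by exists p, q; split.
have [p [[Dp Ep] _] hex] := exit2 clD cE Dp0 Ep0 naeD Eae.
case: (eqVneq (det3 p ae be) 0) => [c0|c0]; first by apply: (atp p) => //; left.
have [cpos|cneg] := ltrP 0 (s * det3 p ae be); first by apply: (atp p) => //; right; left.
have cneg' : s * det3 p ae be < 0.
  by rewrite lt_neqAle cneg andbT; apply/eqP => e; case: hs => es; rewrite es in e; move: c0; rewrite (_ : det3 p ae be = 0) ?eqxx //; lra.
have [epos|eneg] := ltrP 0 (s * det3 p ae bd); first by apply: (atp p) => //; right; right.
have [l l01 Dr] := restart cD cE Dp Ep Eae Ebe Dbd nEbd hs (oBDE p Dp Ep) cneg' eneg.
have Er : E (cmb l ae be) by case/andP: l01 => l0 l1; apply: cvx_cmb.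
have [p' [[Dp' Ep'] [ts _ ep']] hex'] := exit2 clD cE Dr Er naeD Eae.
apply: (atp p') => //; left.
by rewrite ep' /det3 /cmb /=; ring.
Qed.

End Geo8.

Section Geo9.
Variable R : realType.
Implicit Types (u v w x y z q d : plane R) (S : set (plane R)).

Definition insd (sg : R) (r x y z : plane R) :=
  [/\ 0 < sg * det3 r x y, 0 < sg * det3 r y z & 0 < sg * det3 r z x].

Lemma on_edge (sg : R) (m x y z : plane R) : (sg = 1 \/ sg = -1) ->
  det3 m x y = 0 -> 0 <= sg * det3 m y z -> 0 <= sg * det3 m z x -> 0 < sg * det3 x y z -> onseg m x y.
Proof.
move=> hs h0 h1 h2 h3.
have hD : det3 x y z = det3 m y z + det3 m z x by rewrite -(tcl_sum m x y z) h0 add0r.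
have Dn : det3 x y z != 0 by apply/eqP => e; move: h3; rewrite e mulr0 ltxx.
have [b1 b2] := bary m x y z.
have ex : det3 x m z = det3 m z x by rewrite /det3; ring.
have ey : det3 x y m = 0 by rewrite -h0 /det3; ring.
rewrite ex ey mul0r addr0 in b1 b2.
exists (det3 m z x / det3 x y z).
  case: hs => es; rewrite es ?mul1r ?mulN1r in h1 h2 h3.
  - apply/andP; split; first by apply: divr_ge0; lra.
    by rewrite ler_pdivrMr // mul1r; lra.
  - rewrite -mulrNN -invrN; apply/andP; split; first by apply: divr_ge0; lra.
    by rewrite ler_pdivrMr ?mul1r; lra.
have Dn' : det3 m y z + det3 m z x != 0 by rewrite -hD.
apply: pairE; rewrite /cmb /=.
- by apply: (mulfI Dn); rewrite b1 hD; field.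
- by apply: (mulfI Dn); rewrite b2 hD; field.
Qed.
Definition muf (a b : R) : R := if b <= 0 then a / (a - b) else 2.

Lemma muf_props (a b : R) : 0 < a ->
  [/\ 0 < muf a b, (forall l : R, 0 <= l -> l <= muf a b -> l <= 1 -> 0 <= (1 - l) * a + l * b),
      (muf a b <= 1 -> (1 - muf a b) * a + muf a b * b = 0) & (b <= 0 -> muf a b <= 1)].
Proof.
move=> a0; rewrite /muf; case: ifP => hb.
- have d0 : 0 < a - b by lra.
  split.
  + by apply: divr_gt0.
  + move=> l l0 l1 l2; move: l1; rewrite ler_pdivlMr // => l1; clear -l1 l0; nra.
  + by move=> _; field; rewrite gt_eqF.
  + by move=> _; rewrite ler_pdivrMr // mul1r; lra.
- have b0 : 0 < b by move/negbT: hb; rewrite -ltNge.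
  split; [lra | by move=> l l0 _ l2; nra | by move=> h; lra | by move=> h; lra].
Qed.

Lemma aff3 (a1 a2 a3 b1 b2 b3 : R) : 0 < a1 -> 0 < a2 -> 0 < a3 -> (b1 <= 0 \/ b2 <= 0 \/ b3 <= 0) ->
  exists2 l : R, 0 <= l <= 1 &
   [/\ 0 <= (1 - l) * a1 + l * b1, 0 <= (1 - l) * a2 + l * b2, 0 <= (1 - l) * a3 + l * b3 &
     (1 - l) * a1 + l * b1 = 0 \/ (1 - l) * a2 + l * b2 = 0 \/ (1 - l) * a3 + l * b3 = 0].
Proof.
move=> a10 a20 a30 hb.
have [p1 q1 r1 s1] := muf_props b1 a10.
have [p2 q2 r2 s2] := muf_props b2 a20.
have [p3 q3 r3 s3] := muf_props b3 a30.
move: p1 q1 r1 s1 p2 q2 r2 s2 p3 q3 r3 s3.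
set m1 := muf a1 b1; set m2 := muf a2 b2; set m3 := muf a3 b3.
move=> p1 q1 r1 s1 p2 q2 r2 s2 p3 q3 r3 s3.
have one : m1 <= 1 \/ m2 <= 1 \/ m3 <= 1.
  by case: hb => [h|[h|h]]; [left; exact: s1 | right; left; exact: s2 | right; right; exact: s3].
have [h12|h12] := lerP m1 m2; have [h13|h13] := lerP m1 m3; have [h23|h23] := lerP m2 m3.
all: first [ (have l1 : m1 <= 1 by case: one => [h|[h|h]]; lra);
             exists m1; [apply/andP; split; lra | split; [apply: q1; lra|apply: q2; lra|apply: q3; lra| left; exact: r1]]
           | (have l1 : m2 <= 1 by case: one => [h|[h|h]]; lra);
             exists m2; [apply/andP; split; lra | split; [apply: q1; lra|apply: q2; lra|apply: q3; lra| right; left; exact: r2]]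
           | (have l1 : m3 <= 1 by case: one => [h|[h|h]]; lra);
             exists m3; [apply/andP; split; lra | split; [apply: q1; lra|apply: q2; lra|apply: q3; lra| right; right; exact: r3]] ].
Qed.

End Geo9.

Section Geo10.
Variable R : realType.
Implicit Types (u v w x y z q d : plane R) (S : set (plane R)).

Lemma zero_case (sg : R) (m x y z : plane R) : (sg = 1 \/ sg = -1) ->
  sg * det3 m x y = 0 -> 0 <= sg * det3 m y z -> 0 <= sg * det3 m z x -> 0 < sg * det3 x y z -> onseg m x y.
Proof.
move=> hs h0 h1 h2 h3.
have h0' : det3 m x y = 0.
  by case: hs h0 => -> h0; [rewrite mul1r in h0 | move/eqP: h0; rewrite mulN1r oppr_eq0 => /eqP].
exact: (on_edge hs h0' h1 h2 h3).
Qed.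

Lemma transfer (S1 S2 S3 : set (plane R)) (sg : R) (x y z r1 r2 : plane R) :
  pconvex S1 -> pconvex S2 -> pconvex S3 ->
  S1 x -> S1 y -> S2 y -> S2 z -> S3 z -> S3 x -> (sg = 1 \/ sg = -1) ->
  insd sg r1 x y z ->
  (forall l : R, 0 <= l -> l <= 1 -> [/\ ~ S1 (cmb l r1 r2), ~ S2 (cmb l r1 r2) & ~ S3 (cmb l r1 r2)]) ->
  insd sg r2 x y z.
Proof.
move=> c1 c2 c3 S1x S1y S2y S2z S3z S3x hs [a1 a2 a3] hseg.
have hD : 0 < sg * det3 x y z.
  rewrite -(tcl_sum r1); clear -a1 a2 a3; lra.
have [b1|b1] := ltrP 0 (sg * det3 r2 x y); have [b2|b2] := ltrP 0 (sg * det3 r2 y z);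
  have [b3|b3] := ltrP 0 (sg * det3 r2 z x); first by split.
all: exfalso.
all: have hb : sg * det3 r2 x y <= 0 \/ sg * det3 r2 y z <= 0 \/ sg * det3 r2 z x <= 0
       by [left|right; left|right; right].
all: have [l /andP[l0 l1] [h1 h2 h3 hz]] := aff3 a1 a2 a3 hb.
all: have [n1 n2 n3] := hseg l l0 l1.
all: have e1 : (1 - l) * (sg * det3 r1 x y) + l * (sg * det3 r2 x y) = sg * det3 (cmb l r1 r2) x y
       by rewrite det3_cmb1; ring.
all: have e2 : (1 - l) * (sg * det3 r1 y z) + l * (sg * det3 r2 y z) = sg * det3 (cmb l r1 r2) y z
       by rewrite det3_cmb1; ring.
all: have e3 : (1 - l) * (sg * det3 r1 z x) + l * (sg * det3 r2 z x) = sg * det3 (cmb l r1 r2) z x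
       by rewrite det3_cmb1; ring.
all: rewrite e1 e2 e3 in h1 h2 h3 hz.
all: have hD2 : 0 < sg * det3 y z x by rewrite -det3_cycl.
all: have hD3 : 0 < sg * det3 z x y by rewrite -det3_cycl -det3_cycl.
all: case: hz => [hz|[hz|hz]].
all: first [ by apply: n1; apply: (onseg_in c1 S1x S1y); apply: (zero_case hs hz h2 h3 hD)
           | by apply: n2; apply: (onseg_in c2 S2y S2z); apply: (zero_case hs hz h3 h1 hD2)
           | by apply: n3; apply: (onseg_in c3 S3z S3x); apply: (zero_case hs hz h1 h2 hD3) ].
Qed.


Lemma aff_cont (a b c : R) : continuous (fun r : plane R => a * r.1 + b * r.2 + c).
Proof.
move=> x; rewrite /continuous_at.
apply: cvgD; last exact: cvg_cst.
by apply: cvgD; apply: cvgM; try exact: cvg_cst; [exact: cvg_fst|exact: cvg_snd].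
Qed.

Lemma det3_aff (r x y : plane R) (sg : R) :
  sg * det3 r x y = (sg * (x.2 - y.2)) * r.1 + (sg * (y.1 - x.1)) * r.2 + sg * (x.1 * y.2 - x.2 * y.1).
Proof. by rewrite /det3; ring. Qed.

Lemma open_det (sg : R) (x y : plane R) : open [set r : plane R | 0 < sg * det3 r x y].
Proof.
have -> : [set r : plane R | 0 < sg * det3 r x y] =
   (fun r : plane R => (sg * (x.2 - y.2)) * r.1 + (sg * (y.1 - x.1)) * r.2 + sg * (x.1 * y.2 - x.2 * y.1)) @^-1`
   [set u : R | u > 0].
  by apply/seteqP; split => r /=; rewrite det3_aff.
apply: open_comp; last exact: open_gt.
by move=> r _; exact: aff_cont.
Qed.

Lemma closed_det (sg : R) (x y : plane R) : closed [set r : plane R | 0 <= sg * det3 r x y].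
Proof.
have -> : [set r : plane R | 0 <= sg * det3 r x y] =
   (fun r : plane R => (sg * (x.2 - y.2)) * r.1 + (sg * (y.1 - x.1)) * r.2 + sg * (x.1 * y.2 - x.2 * y.1)) @^-1`
   [set u : R | 0 <= u].
  by apply/seteqP; split => r /=; rewrite det3_aff.
apply: closed_comp; last exact: closed_ge.
by move=> r _; exact: aff_cont.
Qed.

Lemma bnd1 (sa sb sc X Y Z r : R) : 0 < sa -> 0 < sb -> 0 < sc ->
  (sa + sb + sc) * r = sa * X + sb * Y + sc * Z -> `|r| <= `|X| + `|Y| + `|Z|.
Proof.
move=> a0 b0 c0 e.
have [x1 x2] := abs_le X; have [y1 y2] := abs_le Y; have [z1 z2] := abs_le Z.
rewrite ler_norml; apply/andP; split; nra.
Qed.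

Lemma comp_bounded (A B C : set (plane R)) (sg : R) (x y z p0 : plane R) :
  pconvex A -> pconvex B -> pconvex C -> A x -> A y -> C y -> C z -> B z -> B x -> (sg = 1 \/ sg = -1) ->
  insd sg p0 x y z -> ~ (A `|` B `|` C) p0 ->
  pbounded (connected_component (~` (A `|` B `|` C)) p0).
Proof.
move=> cA cB cC Ax Ay Cy Cz Bz Bx hs [a1 a2 a3] np0.
have hD : 0 < sg * det3 x y z by rewrite -(tcl_sum p0); clear -a1 a2 a3; lra.
have hD2 : 0 < sg * det3 y z x by rewrite -det3_cycl.
have hD3 : 0 < sg * det3 z x y by rewrite -det3_cycl -det3_cycl.
set O := ~` (A `|` B `|` C).
set Cc := connected_component O p0.
pose U := [set r : plane R | 0 < sg * det3 r x y] `&` [set r | 0 < sg * det3 r y z] `&` [set r | 0 < sg * det3 r z x].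
pose F := [set r : plane R | 0 <= sg * det3 r x y] `&` [set r | 0 <= sg * det3 r y z] `&` [set r | 0 <= sg * det3 r z x].
have oU : open U by apply: openI; [apply: openI|]; exact: open_det.
have cF : closed F by apply: closedI; [apply: closedI|]; exact: closed_det.
have ccO : Cc `<=` O by exact: connected_component_sub.
have e1 : Cc `&` U = Cc.
  have cc : connected Cc by exact: component_connected.
  apply: (cc (Cc `&` U)).
  - by exists p0; split; [exact: connected_component_refl | split].
  - by exists U.
  - exists F => //; apply/seteqP; split => r [Ccr h]; split => //.
      by case: h => [[h1 h2] h3]; split; [split|]; rewrite /= ltW.
    case: h => [[h1 h2] h3]; rewrite /= in h1 h2 h3.
    have Or := ccO r Ccr.
    have [k1|k1] := eqVneq (sg * det3 r x y) 0.
      by exfalso; apply: Or; left; left; apply: (onseg_in cA Ax Ay); apply: (zero_case hs k1 h2 h3 hD).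
    have [k2|k2] := eqVneq (sg * det3 r y z) 0.
      by exfalso; apply: Or; right; apply: (onseg_in cC Cy Cz); apply: (zero_case hs k2 h3 h1 hD2).
    have [k3|k3] := eqVneq (sg * det3 r z x) 0.
      by exfalso; apply: Or; left; right; apply: (onseg_in cB Bz Bx); apply: (zero_case hs k3 h1 h2 hD3).
    by split; [split|]; rewrite /= lt_def ?k1 ?k2 ?k3.
have sub : Cc `<=` U.
  move=> r Ccr; have h : (Cc `&` U) r by rewrite e1.
  by case: h.
exists (`|x.1| + `|y.1| + `|z.1| + (`|x.2| + `|y.2| + `|z.2|)) => r /sub [[h1 h2] h3].
have [b1 b2] := bary r x y z.
have ex : det3 x r z = det3 r z x by rewrite /det3; ring.
have ey : det3 x y r = det3 r x y by rewrite /det3; ring.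
rewrite ex ey -(tcl_sum r) in b1 b2.
have e1' : (sg * det3 r y z + sg * det3 r z x + sg * det3 r x y) * r.1 =
   sg * det3 r y z * x.1 + sg * det3 r z x * y.1 + sg * det3 r x y * z.1.
  have -> : sg * det3 r y z + sg * det3 r z x + sg * det3 r x y = sg * (det3 r x y + det3 r y z + det3 r z x) by ring.
  by rewrite -mulrA b1; ring.
have e2' : (sg * det3 r y z + sg * det3 r z x + sg * det3 r x y) * r.2 =
   sg * det3 r y z * x.2 + sg * det3 r z x * y.2 + sg * det3 r x y * z.2.
  have -> : sg * det3 r y z + sg * det3 r z x + sg * det3 r x y = sg * (det3 r x y + det3 r y z + det3 r z x) by ring.
  by rewrite -mulrA b2; ring.
have := bnd1 h2 h3 h1 e1'; have := bnd1 h2 h3 h1 e2'.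
have := normr_ge0 x.1; have := normr_ge0 y.1; have := normr_ge0 z.1.
have := normr_ge0 x.2; have := normr_ge0 y.2; have := normr_ge0 z.2.
by split; lra.
Qed.

End Geo10.

Section Geo11.
Variable R : realType.

Lemma opos (X Y Z : set (plane R)) (u v w : plane R) : pconvex X -> pconvex Y -> pconvex Z -> tfree X Y Z ->
  orient_pos X Y Z -> Y u -> Z u -> X v -> Z v -> X w -> Y w -> 0 < det3 u v w.
Proof.
move=> cX cY cZ tf [x [y [z [[Yx Zx] [[Xy Zy] [[Xz Yz] h]]]]]] Yu Zu Xv Zv Xw Yw.
have := L1 cX cY cZ tf Yx Zx Xy Zy Xz Yz Yu Zu Xv Zv Xw Yw.
by rewrite pmulr_rgt0.
Qed.

Lemma oneg (X Y Z : set (plane R)) (u v w : plane R) : pconvex X -> pconvex Y -> pconvex Z -> tfree X Y Z ->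
  orient_neg X Y Z -> Y u -> Z u -> X v -> Z v -> X w -> Y w -> det3 u v w < 0.
Proof.
move=> cX cY cZ tf [x [y [z [[Yx Zx] [[Xy Zy] [[Xz Yz] h]]]]]] Yu Zu Xv Zv Xw Yw.
have := L1 cX cY cZ tf Yx Zx Xy Zy Xz Yz Yu Zu Xv Zv Xw Yw.
by rewrite nmulr_rgt0.
Qed.

Lemma conv_inter (X Y : set (plane R)) : pconvex X -> pconvex Y -> pconvex (X `&` Y).
Proof. by move=> cX cY x y [Xx Yx] [Xy Yy] t t0 t1; split; [apply: cX|apply: cY]. Qed.

End Geo11.

Lemma ordne (m n : nat) (hm : (m < 5)%N) (hn : (n < 5)%N) : m != n -> @Ordinal 5 m hm <> @Ordinal 5 n hn.
Proof. by move=> h e; move: h; rewrite (_ : m = n) ?eqxx //; exact: (congr1 val e). Qed.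

Unset Implicit Arguments.
Theorem claim2 (R : realType) (A B C D E : set (plane R)) :
  cconvex A -> cconvex B -> cconvex C -> cconvex D -> cconvex E ->
  holey (fun i : 'I_5 => nth set0 [:: A; B; C; D; E] i) ->
  in_conv D A B C -> in_conv E A B D ->
  D `&` E `<=` hollow A B C.
Proof.
move=> [kA cA] [kB cB] [kC cC] [kD cD] [kE cE] [hpair htrip] hDc hEc p0 [Dp0 Ep0].
have clA : closed A by apply: compact_closed.
have clB : closed B by apply: compact_closed.
have clC : closed C by apply: compact_closed.
have clD : closed D by apply: compact_closed.
pose i0 := @Ordinal 5 0 isT. pose i1 := @Ordinal 5 1 isT. pose i2 := @Ordinal 5 2 isT.
pose i3 := @Ordinal 5 3 isT. pose i4 := @Ordinal 5 4 isT.
have tf : forall i j k : 'I_5, i <> j -> j <> k -> i <> k ->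
    tfree (nth set0 [:: A; B; C; D; E] i) (nth set0 [:: A; B; C; D; E] j) (nth set0 [:: A; B; C; D; E] k).
  move=> i j k h1 h2 h3 r a b c.
  have : ((nth set0 [:: A; B; C; D; E] i) `&` (nth set0 [:: A; B; C; D; E] j) `&` (nth set0 [:: A; B; C; D; E] k)) r by [].
  by rewrite (htrip i j k h1 h2 h3).
have tABC : tfree A B C by apply: (tf i0 i1 i2); apply: ordne.
have tABD : tfree A B D by apply: (tf i0 i1 i3); apply: ordne.
have tBCD : tfree B C D by apply: (tf i1 i2 i3); apply: ordne.
have tCAD : tfree C A D by apply: (tf i2 i0 i3); apply: ordne.
have tABE : tfree A B E by apply: (tf i0 i1 i4); apply: ordne.
have tBDE : tfree B D E by apply: (tf i1 i3 i4); apply: ordne.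
have tDAE : tfree D A E by apply: (tf i3 i0 i4); apply: ordne.
have tADE : tfree A D E by apply: (tf i0 i3 i4); apply: ordne.
have tCDE : tfree C D E by apply: (tf i2 i3 i4); apply: ordne.
have [ab [Aab Bab]] := hpair i0 i1.
have [ac [Aac Cac]] := hpair i0 i2.
have [bc [Bbc Cbc]] := hpair i1 i2.
have [ad [Aad Dad]] := hpair i0 i3.
have [bd [Bbd Dbd]] := hpair i1 i3.
have [cd [Ccd Dcd]] := hpair i2 i3.
have [ae [Aae Eae]] := hpair i0 i4.
have [be [Bbe Ebe]] := hpair i1 i4.
have hE1 : exists ep : R, (ep = 1 \/ ep = -1) /\ 0 < ep * det3 bd ad ab /\
    0 < ep * det3 cd bd bc /\ 0 < ep * det3 ad cd ac.
  case: hDc => [[h1 [h2 h3]]|[h1 [h2 h3]]].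
  - exists 1; rewrite !mul1r; split; first by left.
    split; first exact: (opos cA cB cD tABD h1 Bbd Dbd Aad Dad Aab Bab).
    split; first exact: (opos cB cC cD tBCD h2 Ccd Dcd Bbd Dbd Bbc Cbc).
    exact: (opos cC cA cD tCAD h3 Aad Dad Ccd Dcd Cac Aac).
  - exists (-1); rewrite !mulN1r !oppr_gt0; split; first by right.
    split; first exact: (oneg cA cB cD tABD h1 Bbd Dbd Aad Dad Aab Bab).
    split; first exact: (oneg cB cC cD tBCD h2 Ccd Dcd Bbd Dbd Bbc Cbc).
    exact: (oneg cC cA cD tCAD h3 Aad Dad Ccd Dcd Cac Aac).
case: hE1 => ep [hep [k1 [k2 k3]]].
have hE2 : exists s : R, (s = 1 \/ s = -1) /\
    (forall p, D p -> E p -> 0 < s * det3 ae p ad) /\ (forall p, D p -> E p -> 0 < s * det3 p be bd) /\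
    0 < s * det3 be ae ab.
  case: hEc => [[h1 [h2 h3]]|[h1 [h2 h3]]].
  - exists 1; split; first by left.
    split; first by move=> p Dp Ep; rewrite mul1r; exact: (opos cD cA cE tDAE h3 Aae Eae Dp Ep Dad Aad).
    split; first by move=> p Dp Ep; rewrite mul1r; exact: (opos cB cD cE tBDE h2 Dp Ep Bbe Ebe Bbd Dbd).
    by rewrite mul1r; exact: (opos cA cB cE tABE h1 Bbe Ebe Aae Eae Aab Bab).
  - exists (-1); split; first by right.
    split; first by move=> p Dp Ep; rewrite mulN1r oppr_gt0; exact: (oneg cD cA cE tDAE h3 Aae Eae Dp Ep Dad Aad).
    split; first by move=> p Dp Ep; rewrite mulN1r oppr_gt0; exact: (oneg cB cD cE tBDE h2 Dp Ep Bbe Ebe Bbd Dbd).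
    by rewrite mulN1r oppr_gt0; exact: (oneg cA cB cE tABE h1 Bbe Ebe Aae Eae Aab Bab).
case: hE2 => s [hs [oDAE [oBDE oABE]]].
have [p1 [q [[Dp1 Ep1] nDq hseg tq]]] := find_good cA cB cD cE clA clB clC clD Aab Bab Aad Dad Bbd Dbd
  Aae Eae Bbe Ebe Dp0 Ep0 tADE tBDE tCDE tABE hs oDAE oBDE oABE.
have q0 : cmb 0 q p1 = q by apply: pairE; rewrite /cmb /=; ring.
have [nAq nBq nCq] := hseg 0 (lexx 0) ler01; rewrite q0 in nAq nBq nCq.
have t2 := level2 cA cB cC cD Aab Bab Aac Cac Bbc Cbc Aad Dad Bbd Dbd Ccd Dcd nAq nBq nCq nDq hep k1 k2 k3 tq.
have [sg hsg [g1 g2 g3]] := tcl_nz t2.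
have ins1 : insd sg p1 ab ac bc.
  apply: (transfer cA cC cB Aab Aac Cac Cbc Bbc Bab hsg (r1 := q)); first by split.
  by move=> l l0 l1; have [h1 h2 h3] := hseg l l0 l1; split.
have ins0 : insd sg p0 ab ac bc.
  apply: (transfer cA cC cB Aab Aac Cac Cbc Bbc Bab hsg ins1) => l l0 l1.
  have cDE := conv_inter cD cE.
  have [Dm Em] : (D `&` E) (cmb l p1 p0) by apply: cvx_cmb.
  by split => h; [apply: (tADE _ h Dm Em)|apply: (tCDE _ h Dm Em)|apply: (tBDE _ h Dm Em)].
have np0 : ~ (A `|` B `|` C) p0.
  by case=> [[h|h]|h]; [apply: (tADE p0)|apply: (tBDE p0)|apply: (tCDE p0)].
split => //.
exact: (comp_bounded cA cB cC Aab Aac Cac Cbc Bbc Bab hsg ins0 np0).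
Qed.
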